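(* Let $N\ge3$, $\mu\ge0$, assume (K0) and (F0), and let $p>p_S(\alpha)$. For every $\sigma>0$ there is $\zeta_\sigma>0$ such that $r_0(\zeta)\ge\sigma\zeta^{-1/\theta}$ for all $\zeta>\zeta_\sigma$. Furthermore, for every $\sigma>0$, $$\lim_{\zeta\to\infty}\zeta^{-1}\big|u(\sigma\zeta^{-1/\theta},\zeta)-\bar u(\sigma\zeta^{-1/\theta},\zeta)\big|=0,\qquad \lim_{\zeta\to\infty}\zeta^{-1-1/\theta}\big|u_r(\sigma\zeta^{-1/\theta},\zeta)-\bar u_r(\sigma\zeta^{-1/\theta},\zeta)\big|=0.$$
   Context: (K0): $K:(0,\infty)\to(0,\infty)$ is continuous and $K(r)=(k_0+o(1))r^{\alpha}$ as $r\to0$ for some $\alpha>-2$, $k_0>0$. (F0): $f:(0,\infty)\to[0,\infty)$ is continuous, not identically zero, and $f(r)=O(r^{\nu})$ as $r\to0$ for some $\nu>-2$. $p_S(\alpha)=\frac{N+2+2\alpha}{N-2}$, $\theta:=\frac{2+\alpha}{p-1}$. For $\zeta>0$, $u(\cdot,\zeta)$ denotes the (unique) regular solution of $u''+\frac{N-1}{r}u'+K(r)\max\{u,0\}^p+\mu f(r)=0$ with $u(0)=\zeta$, i.e. the continuous solution on $[0,\infty)$ of $u(r)=\zeta-\int_0^r\frac{s^{2-N}-r^{2-N}}{N-2}s^{N-1}\big(K(s)\max\{u(s),0\}^p+\mu f(s)\big)ds$; $r_0(\zeta)\in(0,\infty]$ is its first zero ($r_0(\zeta)=\infty$ if $u(\cdot,\zeta)>0$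 on $(0,\infty)$). $\bar u(\cdot,\zeta)$ denotes the solution of $\bar u''+\frac{N-1}{r}\bar u'+k_0r^{\alpha}\bar u^p=0$ for $r>0$, $\bar u(0)=\zeta$ (regular at $0$), which is positive on $(0,\infty)$ and satisfies $\bar u(r,\zeta)=\zeta\bar u(\zeta^{1/\theta}r,1)$. *)

(* Defs.v *)
From Stdlib Require Import Reals.
From Coquelicot Require Import Coquelicot.
Open Scope R_scope.

Definition powp (x a : R) : R := if Rlt_dec 0 x then Rpower x a else 0.

Definition pS (N : nat) (alpha : R) : R := (INR N + 2 + 2 * alpha) / (INR N - 2).

Definition theta (alpha p : R) : R := (2 + alpha) / (p - 1).

(* v is the regular solution with v(0) = zeta of
     v'' + (N-1)/r v' + Kf(r) max{v,0}^p + mu f(r) = 0,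
   i.e. v is continuous on [0,oo) and
     v(r) = zeta - int_0^r (s^{2-N} - r^{2-N})/(N-2) s^{N-1}
                       (Kf(s) max{v(s),0}^p + mu f(s)) ds   (r > 0),
   the integral being the (improper at 0) integral over (0,r]. *)
Definition regular_solution (N : nat) (p mu : R) (Kf f : R -> R)
    (zeta : R) (v : R -> R) : Prop :=
  v 0 = zeta /\
  filterlim v (at_right 0) (locally zeta) /\
  (forall r, 0 < r -> continuous v r) /\
  (forall r, 0 < r ->
     is_RInt_gen
       (fun s => (Rpower s (2 - INR N) - Rpower r (2 - INR N)) / (INR N - 2)
                 * Rpower s (INR N - 1)
                 * (Kf s * powp (Rmax (v s) 0) p + mu * f s))
       (at_right 0) (at_point r) (zeta - v r)).

(* First zero r_0 of g on (0,oo); +oo if there is none. *)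
Definition first_zero (g : R -> R) : Rbar :=
  Glb_Rbar (fun r => 0 < r /\ g r = 0).

(* Main.v *)
Require Import Defs.
From Stdlib Require Import Reals Lra.
From Coquelicot Require Import Coquelicot.
Open Scope R_scope.

Lemma gen_to_lim (f : R -> R) (r l : R) :
  is_RInt_gen f (at_right 0) (at_point r) l ->
  filterlim (fun e => RInt f e r) (at_right 0) (locally l).
Proof.
  intros H P HP.
  specialize (H P HP).
  destruct H as [Q R' HQ HR Hqr].
  unfold filtermap. eapply filter_imp; [|exact HQ].
  intros e He. destruct (Hqr e r He HR) as [y [Hy Py]].
  simpl in Hy. now rewrite (is_RInt_unique _ _ _ _ Hy).
Qed.

Lemma ball_R (x y : R) (e : R) : ball x e y <-> Rabs (y - x) < e.
Proof. reflexivity. Qed.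

Lemma lim_le (F : R -> R) (l c r : R) : 0 < r ->
  filterlim F (at_right 0) (locally l) ->
  (forall e, 0 < e < r -> F e <= c) -> l <= c.
Proof.
  intros Hr H Hb.
  destruct (Rle_or_lt l c) as [h|h]; auto.
  assert (Hp : 0 < l - c) by lra.
  specialize (H (ball l (mkposreal _ Hp)) (locally_ball _ _)).
  unfold filtermap in H. destruct H as [d Hd].
  set (e := Rmin (d/2) (r/2)).
  assert (he : 0 < e) by (unfold e; apply Rmin_pos; destruct d; simpl; lra).
  assert (h1 : ball 0 d e).
  { apply ball_R. rewrite Rminus_0_r, Rabs_pos_eq by lra. unfold e.
    destruct d as [d dp]; simpl. pose proof (Rmin_l (d/2) (r/2)); lra. }
  specialize (Hd e h1 he). apply ball_R in Hd.
  assert (F e <= c) by (apply Hb; split; auto; unfold e; pose proof (Rmin_r (d/2) (r/2)); lra).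
  assert (Hd2 : Rabs (F e - l) < l - c) by exact Hd. apply Rabs_lt_between in Hd2. lra.
Qed.

Lemma lim_ge (F : R -> R) (l c r : R) : 0 < r ->
  filterlim F (at_right 0) (locally l) ->
  (forall e, 0 < e < r -> c <= F e) -> c <= l.
Proof.
  intros Hr H Hb.
  assert (H' : filterlim (fun e => - F e) (at_right 0) (locally (- l))).
  { eapply filterlim_comp; [exact H|]. apply (filterlim_opp l). }
  pose proof (lim_le _ _ (-c) r Hr H') . enough (-l <= -c) by lra.
  apply H0. intros e he. specialize (Hb e he). lra.
Qed.

Lemma lim_abs_le (F : R -> R) (l c r : R) : 0 < r ->
  filterlim F (at_right 0) (locally l) ->
  (forall e, 0 < e < r -> Rabs (F e) <= c) -> Rabs l <= c.
Proof.
  intros Hr H Hb. apply Rabs_le. split.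
  - apply (lim_ge F l (-c) r); auto. intros e he. specialize (Hb e he).
    apply Rabs_le_between in Hb. lra.
  - apply (lim_le F l c r); auto. intros e he. specialize (Hb e he).
    apply Rabs_le_between in Hb. lra.
Qed.


Lemma Rpower_pos (x a : R) : 0 < Rpower x a.
Proof. unfold Rpower; apply exp_pos. Qed.

Lemma is_derive_Rpower (a x : R) : 0 < x ->
  is_derive (fun s => Rpower s a) x (a * Rpower x (a - 1)).
Proof. intros; apply is_derive_Reals, derivable_pt_lim_power; auto. Qed.

Lemma continuous_Rpower (a x : R) : 0 < x -> continuous (fun s => Rpower s a) x.
Proof. intros; apply (ex_derive_continuous (fun s => Rpower s a)); eexists; apply is_derive_Rpower; auto. Qed.

Lemma Rpower_lt_1 (x a : R) : 0 < x < 1 -> 0 < a -> Rpower x a < 1.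
Proof.
  intros. rewrite <- (Rpower_O x) at 1 by lra.
  unfold Rpower. apply exp_increasing.
  assert (ln x < 0). { rewrite <- ln_1. apply ln_increasing; lra. }
  nra.
Qed.


Lemma D_eq (f : R -> R) (x l l' : R) : is_derive f x l -> l = l' -> is_derive f x l'.
Proof. intros; subst; auto. Qed.
Lemma D_ext (f g : R -> R) x l : (forall t, f t = g t) -> is_derive f x l -> is_derive g x l.
Proof. intros; eapply is_derive_ext; eauto. Qed.
Lemma D_ext_loc (f g : R -> R) x l : (exists d : posreal, forall t, Rabs (t - x) < d -> f t = g t) ->
  is_derive f x l -> is_derive g x l.
Proof. intros [d Hd] H. apply (is_derive_ext_loc f g x l); auto. exists d. intros t Ht. apply Hd. exact Ht. Qed.
Lemma D_const (c x : R) : is_derive (fun _ => c) x 0.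
Proof. apply (is_derive_const c x). Qed.
Lemma D_id (x : R) : is_derive (fun s => s) x 1.
Proof. apply (is_derive_id x). Qed.
Lemma D_plus (f g : R -> R) x df dg : is_derive f x df -> is_derive g x dg ->
  is_derive (fun s => f s + g s) x (df + dg).
Proof. intros. apply (is_derive_plus f g x df dg); auto. Qed.
Lemma D_opp (f : R -> R) x df : is_derive f x df -> is_derive (fun s => - f s) x (- df).
Proof. intros. apply (is_derive_opp f x df); auto. Qed.
Lemma D_minus (f g : R -> R) x df dg : is_derive f x df -> is_derive g x dg ->
  is_derive (fun s => f s - g s) x (df - dg).
Proof. intros. apply (is_derive_minus f g x df dg); auto. Qed.
Lemma D_mult (f g : R -> R) x df dg : is_derive f x df -> is_derive g x dg ->
  is_derive (fun s => f s * g s) x (df * g x + f x * dg).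
Proof. intros. apply (is_derive_mult f g x df dg); auto. intros; apply Rmult_comm. Qed.
Lemma D_scal (f : R -> R) x k df : is_derive f x df -> is_derive (fun s => k * f s) x (k * df).
Proof. intros. apply is_derive_scal; auto. Qed.
Lemma D_comp (f g : R -> R) x df dg : is_derive f (g x) df -> is_derive g x dg ->
  is_derive (fun s => f (g s)) x (dg * df).
Proof. intros. apply (is_derive_comp f g x df dg); auto. Qed.
Lemma D_exp (x : R) : is_derive exp x (exp x).
Proof. apply is_derive_exp. Qed.

Lemma is_RInt_pow (a e r : R) : -1 < a -> 0 < e -> e <= r ->
  is_RInt (fun s => Rpower s a) e r ((Rpower r (a+1) - Rpower e (a+1)) / (a+1)).
Proof.
  intros Ha He Her.
  assert (H : is_RInt (fun s => Rpower s a) e r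
     (minus ((fun s => Rpower s (a+1) / (a+1)) r) ((fun s => Rpower s (a+1) / (a+1)) e))).
  { apply (is_RInt_ext (fun s => /(a+1) * ((a+1) * Rpower s (a + 1 - 1)))).
    - intros x Hx. replace (a+1-1) with a by ring. change (/(a+1) * ((a+1) * Rpower x a) = Rpower x a). field. lra.
    - apply (is_RInt_derive (fun s => Rpower s (a+1) / (a+1))).
      + intros x Hx. rewrite Rmin_left in Hx by lra.
        eapply D_ext. 2: apply D_scal, is_derive_Rpower; lra.
        intros t; simpl; unfold Rdiv; ring.
      + intros x Hx. rewrite Rmin_left in Hx by lra.
        apply (continuous_mult (fun _ => /(a+1))); [apply continuous_const|].
        apply (continuous_mult (fun _ => (a+1))); [apply continuous_const|].
        apply continuous_Rpower; lra. }
  revert H. unfold minus, plus, opp; simpl.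
  replace ((Rpower r (a+1) - Rpower e (a+1)) / (a+1)) with
    (Rpower r (a + 1) / (a + 1) + - (Rpower e (a + 1) / (a + 1))) by (field; lra).
  auto.
Qed.

Lemma RInt_pow_le (a e r : R) : -1 < a -> 0 < e -> e <= r ->
  RInt (fun s => Rpower s a) e r <= Rpower r (a+1) / (a+1).
Proof.
  intros. rewrite (is_RInt_unique _ _ _ _ (is_RInt_pow a e r H H0 H1)).
  pose proof (Rpower_pos e (a+1)). unfold Rdiv.
  apply Rmult_le_compat_r. left; apply Rinv_0_lt_compat; lra. lra.
Qed.

Lemma ex_RInt_cont (h : R -> R) (e r : R) : 0 < e -> e <= r ->
  (forall s, 0 < s -> continuous h s) -> ex_RInt h e r.
Proof.
  intros. apply (ex_RInt_continuous (V:=R_CompleteNormedModule) h). intros z Hz.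
  rewrite Rmin_left in Hz by lra. apply H1. lra.
Qed.

Definition PP (q x : R) : R := powp (Rmax x 0) q.

Lemma PP_pos (q x : R) : 0 < x -> PP q x = Rpower x q.
Proof. intros. unfold PP, powp. rewrite Rmax_left by lra. destruct (Rlt_dec 0 x); [auto|lra]. Qed.

Lemma PP_neg (q x : R) : x <= 0 -> PP q x = 0.
Proof. intros. unfold PP, powp. rewrite Rmax_right by lra. destruct (Rlt_dec 0 0); [lra|auto]. Qed.

Lemma PP_nonneg (q x : R) : 0 <= PP q x.
Proof. destruct (Rle_or_lt x 0). rewrite PP_neg; lra. rewrite PP_pos by auto. left; apply Rpower_pos. Qed.

Lemma PP_le (q x z : R) : 0 <= q -> x <= z -> 0 < z -> PP q x <= Rpower z q.
Proof.
  intros. destruct (Rle_or_lt x 0). rewrite PP_neg by lra. left; apply Rpower_pos.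
  rewrite PP_pos by auto. apply Rle_Rpower_l; lra.
Qed.

Lemma PP_mult (q c x : R) : 0 < c -> PP q (c * x) = Rpower c q * PP q x.
Proof.
  intros. destruct (Rle_or_lt x 0).
  - rewrite !PP_neg by nra. ring.
  - rewrite !PP_pos by nra. rewrite Rpower_mult_distr; auto.
Qed.

Lemma x_PP (q x : R) : x * PP q x = PP (q+1) x.
Proof.
  destruct (Rle_or_lt x 0).
  - rewrite !PP_neg by nra. ring.
  - rewrite !PP_pos by nra. rewrite Rpower_plus, Rpower_1 by auto. ring.
Qed.

Lemma is_derive_PP (q x : R) : 1 < q -> is_derive (PP q) x (q * PP (q-1) x).
Proof.
  intros Hq.
  destruct (Rlt_or_le 0 x) as [hx|hx].
  - rewrite (PP_pos (q-1) x) by lra.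
    apply (D_ext_loc (fun s => Rpower s q)); [|apply is_derive_Rpower; auto].
    exists (mkposreal x hx). intros t Ht. simpl in Ht.
    apply Rabs_lt_between in Ht. rewrite PP_pos by lra. auto.
  - destruct hx as [hx|hx].
    + rewrite PP_neg by lra.
      rewrite Rmult_0_r.
      apply (D_ext_loc (fun _ => 0)); [|apply (D_const 0)].
      assert (hx' : 0 < -x) by lra.
      exists (mkposreal _ hx'). intros t Ht. simpl in Ht.
      apply Rabs_lt_between in Ht. rewrite PP_neg by lra. auto.
    + subst x. rewrite PP_neg by lra. rewrite Rmult_0_r.
      apply is_derive_Reals. intros eps Heps.
      assert (hd : 0 < Rpower eps (/ (q-1))) by apply Rpower_pos.
      exists (mkposreal _ hd). intros h Hh0 Hh. simpl in Hh.
      rewrite Rplus_0_l, (PP_neg q 0) by lra. rewrite Rminus_0_r, Rminus_0_r.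
      destruct (Rle_or_lt h 0).
      * rewrite PP_neg by auto. unfold Rdiv. rewrite Rmult_0_l, Rabs_R0. auto.
      * rewrite PP_pos by auto. rewrite Rabs_pos_eq in Hh by lra.
        replace (Rpower h q / h) with (Rpower h (q-1)).
        2: { replace q with ((q-1)+1) at 2 by ring. rewrite Rpower_plus, Rpower_1 by auto. field. lra. }
        rewrite Rabs_pos_eq by (left; apply Rpower_pos).
        replace eps with (Rpower (Rpower eps (/(q-1))) (q-1)).
        2: { rewrite Rpower_mult. replace (/(q-1) * (q-1)) with 1 by (field; lra). apply Rpower_1; auto. }
        apply Rlt_Rpower_l; lra.
Qed.

Lemma continuous_PP (q x : R) : 1 < q -> continuous (PP q) x.
Proof. intros. apply (ex_derive_continuous (PP q)). eexists. apply is_derive_PP; auto. Qed.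

Lemma PP_lip (q x y z : R) : 1 <= q -> x <= z -> y <= z -> 0 < z ->
  Rabs (PP q x - PP q y) <= q * Rpower z (q-1) * Rabs (x - y).
Proof.
  intros Hq.
  assert (key : forall a b, 0 < a -> a <= z -> b <= 0 -> 0 < z ->
     Rabs (PP q a - PP q b) <= q * Rpower z (q-1) * Rabs (a - b)).
  { intros a b Ha Haz Hb Hz. rewrite PP_pos, PP_neg by lra.
    rewrite Rminus_0_r, Rabs_pos_eq by (left; apply Rpower_pos).
    rewrite (Rabs_pos_eq (a-b)) by lra.
    replace (Rpower a q) with (a * Rpower a (q-1)).
    2: { replace q with ((q-1)+1) at 2 by ring. rewrite Rpower_plus, Rpower_1 by auto. ring. }
    assert (Rpower a (q-1) <= Rpower z (q-1)) by (apply Rle_Rpower_l; lra).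
    pose proof (Rpower_pos a (q-1)). pose proof (Rpower_pos z (q-1)).
    apply Rle_trans with (a * Rpower z (q-1)). apply Rmult_le_compat_l; lra.
    apply Rle_trans with ((a - b) * Rpower z (q-1)). apply Rmult_le_compat_r; lra.
    replace (q * Rpower z (q-1) * (a-b)) with (q * ((a-b)*Rpower z (q-1))) by ring.
    assert (0 <= (a-b)*Rpower z (q-1)) by (apply Rmult_le_pos; lra). nra. }
  intros Hx Hy Hz.
  destruct (Rle_or_lt x 0); destruct (Rle_or_lt y 0).
  - rewrite !PP_neg by auto. rewrite Rminus_0_r, Rabs_R0.
    apply Rmult_le_pos; [|apply Rabs_pos]. pose proof (Rpower_pos z (q-1)). nra.
  - rewrite Rabs_minus_sym, (Rabs_minus_sym x). apply key; auto.
  - apply key; auto.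
  -
    rewrite !PP_pos by auto.
    destruct (MVT_gen (fun s => Rpower s q) x y (fun s => q * Rpower s (q-1))) as [c [Hc Hmvt]].
    + intros s Hs. apply is_derive_Rpower. pose proof (Rmin_glb_lt x y 0). 
      assert (0 < Rmin x y) by (apply Rmin_glb_lt; auto). lra.
    + intros s Hs. apply continuity_pt_filterlim. apply continuous_Rpower.
      assert (0 < Rmin x y) by (apply Rmin_glb_lt; auto). lra.
    + rewrite Rabs_minus_sym. rewrite Hmvt. rewrite Rabs_mult, (Rabs_minus_sym x).
      apply Rmult_le_compat_r; [apply Rabs_pos|].
      assert (0 < Rmin x y) by (apply Rmin_glb_lt; auto).
      assert (Rmax x y <= z) by (apply Rmax_lub; auto).
      rewrite Rabs_pos_eq.
      2: { pose proof (Rpower_pos c (q-1)). nra. }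
      apply Rmult_le_compat_l; [lra|]. apply Rle_Rpower_l; lra.
Qed.

Definition LIM (F : R -> R) (l : R) := filterlim F (at_right 0) (locally l).

Lemma lim_cont (F h : R -> R) l : LIM F l -> continuous h l -> LIM (fun e => h (F e)) (h l).
Proof. intros H1 H2. unfold LIM. eapply filterlim_comp; eauto. Qed.

Lemma lim_plus2 (F G : R -> R) l1 l2 : LIM F l1 -> LIM G l2 -> LIM (fun e => F e + G e) (l1 + l2).
Proof.
  intros H1 H2. unfold LIM.
  apply (filterlim_comp_2 F G Rplus H1 H2).
  apply (filterlim_plus (K:=R_AbsRing) (V:=R_NormedModule) l1 l2).
Qed.

Lemma lim_const (c : R) : LIM (fun _ => c) c.
Proof. apply filterlim_const. Qed.

Lemma lim_lin (F G : R -> R) l1 l2 a b c : LIM F l1 -> LIM G l2 ->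
  LIM (fun e => a * F e + b * G e + c) (a * l1 + b * l2 + c).
Proof.
  intros H1 H2.
  apply lim_plus2; [|apply lim_const].
  apply lim_plus2.
  - apply (lim_cont F (fun x => a * x)); auto. apply (continuous_mult (fun _ => a) (fun x => x)).
    apply continuous_const. apply continuous_id.
  - apply (lim_cont G (fun x => b * x)); auto. apply (continuous_mult (fun _ => b) (fun x => x)).
    apply continuous_const. apply continuous_id.
Qed.

Lemma lim_ext (F G : R -> R) l d : 0 < d -> (forall e, 0 < e < d -> F e = G e) -> LIM F l -> LIM G l.
Proof.
  intros Hd He H. unfold LIM. apply (filterlim_ext_loc F G); auto.
  exists (mkposreal d Hd). intros y Hy Hy0. apply He. split; auto.
  assert (Hy2 : Rabs (y - 0) < d) by exact Hy. rewrite Rminus_0_r, Rabs_pos_eq in Hy2; lra.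
Qed.

Lemma lim_uniq (F : R -> R) l1 l2 : LIM F l1 -> LIM F l2 -> l1 = l2.
Proof.
  intros H1 H2.
  assert (H : LIM (fun e => 1 * F e + (-1) * F e + 0) (1 * l1 + (-1) * l2 + 0)) by (apply lim_lin; auto).
  assert (H' : LIM (fun _ => 0) (1 * l1 + (-1) * l2 + 0)).
  { apply (lim_ext (fun e => 1 * F e + (-1) * F e + 0) _ _ 1); [lra| |exact H]. intros; ring. }
  assert (1 * l1 + (-1) * l2 + 0 <= 0) by (apply (lim_le (fun _ => 0) _ 0 1); auto; try lra; intros; lra).
  assert (0 <= 1 * l1 + (-1) * l2 + 0) by (apply (lim_ge (fun _ => 0) _ 0 1); auto; try lra; intros; lra).
  lra.
Qed.

Definition kern (n r s : R) : R :=
  (Rpower s (2 - n) - Rpower r (2 - n)) / (n - 2) * Rpower s (n - 1).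

Definition gF (p mu : R) (Kf f v : R -> R) (s : R) : R := Kf s * PP p (v s) + mu * f s.

Definition WF (n p mu : R) (Kf f : R -> R) (zeta : R) (v : R -> R) : Prop :=
  v 0 = zeta /\ filterlim v (at_right 0) (locally zeta) /\
  (forall r, 0 < r -> continuous v r) /\
  (forall r, 0 < r -> LIM (fun e => RInt (fun s => kern n r s * gF p mu Kf f v s) e r) (zeta - v r)).

Lemma RS_WF N p mu Kf f zeta v :
  regular_solution N p mu Kf f zeta v -> WF (INR N) p mu Kf f zeta v.
Proof.
  intros [H1 [H2 [H3 H4]]]. split; auto. split; auto. split; auto.
  intros r Hr. apply (gen_to_lim _ r). exact (H4 r Hr).
Qed.

Lemma continuous_gF p mu Kf f v s : 1 < p -> 0 < s ->
  continuous Kf s -> continuous f s -> continuous v s -> continuous (gF p mu Kf f v) s.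
Proof.
  intros. unfold gF.
  apply (continuous_plus (fun s => Kf s * PP p (v s)) (fun s => mu * f s)).
  - apply (continuous_mult Kf (fun s => PP p (v s))); auto.
    apply (continuous_comp v (PP p)); auto. apply continuous_PP; auto.
  - apply (continuous_mult (fun _ => mu) f); auto. apply continuous_const.
Qed.

Lemma Rpower_1_base (a : R) : Rpower 1 a = 1.
Proof. unfold Rpower. rewrite ln_1, Rmult_0_r. apply exp_0. Qed.

Lemma RInt_lin (h1 h2 : R -> R) a b c d :
  ex_RInt h1 a b -> ex_RInt h2 a b ->
  RInt (fun s => (h1 s - c * h2 s) / d) a b = (RInt h1 a b - c * RInt h2 a b) / d.
Proof.
  intros E1 E2.
  apply is_RInt_unique.
  apply (is_RInt_ext (fun s => scal (/d) (minus (h1 s) (scal c (h2 s))))).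
  { intros; unfold scal, minus, plus, opp; simpl; unfold mult; simpl. unfold Rdiv. ring. }
  replace ((RInt h1 a b - c * RInt h2 a b) / d) with
    (scal (/d) (minus (RInt h1 a b) (scal c (RInt h2 a b)))).
  2: { unfold scal, minus, plus, opp; simpl; unfold mult; simpl. unfold Rdiv. ring. }
  exact (is_RInt_scal (V:=R_NormedModule) _ a b (/d) _
    (is_RInt_minus (V:=R_NormedModule) _ _ a b _ _ (RInt_correct (V:=R_CompleteNormedModule) _ a b E1)
       (is_RInt_scal (V:=R_NormedModule) _ a b c _ (RInt_correct (V:=R_CompleteNormedModule) _ a b E2)))).
Qed.

Lemma RInt_ext_R (f g : R -> R) a b : (forall x, Rmin a b < x < Rmax a b -> f x = g x) ->
  RInt f a b = RInt g a b.
Proof. intros. apply RInt_ext; auto. Qed.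

Lemma ex_RInt_pos (h : R -> R) (a b : R) : 0 < a -> 0 < b ->
  (forall s, 0 < s -> continuous h s) -> ex_RInt h a b.
Proof.
  intros. apply (ex_RInt_continuous (V:=R_CompleteNormedModule) h). intros z Hz.
  apply H1. assert (0 < Rmin a b) by (apply Rmin_glb_lt; auto). lra.
Qed.

Lemma is_derive_RInt1 (h : R -> R) (r : R) : 0 < r -> (forall s, 0 < s -> continuous h s) ->
  is_derive (fun x => RInt h 1 x) r (h r).
Proof.
  intros Hr Hh. apply (is_derive_RInt h (fun x => RInt h 1 x) 1 r).
  - exists (mkposreal r Hr). intros b Hb. assert (Hb2 : Rabs (b - r) < r) by exact Hb.
    apply Rabs_lt_between in Hb2.
    apply (RInt_correct (V:=R_CompleteNormedModule)). apply ex_RInt_pos; auto; lra.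
  - apply Hh; auto.
Qed.

Lemma Rpower_kern (n s : R) : 0 < s -> Rpower s (2 - n) * Rpower s (n - 1) = s.
Proof. intros. rewrite <- Rpower_plus. replace (2 - n + (n - 1)) with 1 by ring. apply Rpower_1; auto. Qed.

Lemma STR n p mu Kf f zeta v :
  2 < n -> 1 < p ->
  (forall s, 0 < s -> continuous Kf s) -> (forall s, 0 < s -> continuous f s) ->
  WF n p mu Kf f zeta v ->
  exists B : R -> R,
    (forall r, 0 < r -> LIM (fun e => RInt (fun s => Rpower s (n-1) * gF p mu Kf f v s) e r) (B r)) /\
    (forall r, 0 < r -> is_derive v r (- Rpower r (1 - n) * B r)).
Proof.
  intros Hn Hp HK Hf [H0 [Hc [Hv Hw]]].
  set (g := gF p mu Kf f v) in *.
  assert (hg : forall s, 0 < s -> continuous g s) by (intros; apply continuous_gF; auto).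
  set (hs := fun s => s * g s). set (hb := fun s => Rpower s (n-1) * g s).
  assert (chs : forall s, 0 < s -> continuous hs s).
  { intros. apply (continuous_mult (fun s => s) g); auto. apply continuous_id. }
  assert (chb : forall s, 0 < s -> continuous hb s).
  { intros. apply (continuous_mult (fun s => Rpower s (n-1)) g); auto. apply continuous_Rpower; auto. }
  set (A0 := (fun r => RInt hs 1 r) : R -> R). set (B0 := (fun r => RInt hb 1 r) : R -> R).
  set (c := fun r => Rpower r (2-n)).
  set (a := (fun e => RInt hs e 1) : R -> R). set (b := (fun e => RInt hb e 1) : R -> R).
  set (T := (fun r e => RInt (fun s => kern n r s * g s) e r) : R -> R -> R).
  assert (Key : forall r e, 0 < r -> 0 < e ->
     (n - 2) * T r e = a e + A0 r - c r * (b e + B0 r)).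
  { intros r e Hr He. unfold T.
    rewrite (RInt_ext_R _ (fun s => (hs s - c r * hb s) / (n - 2))).
    2: { intros x Hx. assert (0 < Rmin e r) by (apply Rmin_glb_lt; auto).
         unfold kern, hs, hb, c. 
         replace (x * g x) with (Rpower x (2-n) * Rpower x (n-1) * g x)
           by (rewrite Rpower_kern; lra). field. lra. }
    rewrite RInt_lin by (apply ex_RInt_pos; auto).
    unfold a, b, A0, B0.
    rewrite <- (RInt_Chasles hs e 1 r) by (apply ex_RInt_pos; auto; lra).
    rewrite <- (RInt_Chasles hb e 1 r) by (apply ex_RInt_pos; auto; lra).
    simpl. unfold plus; simpl. field. lra. }
  assert (c1 : c 1 = 1) by (unfold c; apply Rpower_1_base).
  assert (c2 : c 2 < 1).
  { unfold c. rewrite <- (Rpower_O 2) by lra. apply Rpower_lt; lra. }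
  set (beta := ((n-2)*((zeta - v 1) - (zeta - v 2)) - A0 1 + A0 2 + c 1 * B0 1 - c 2 * B0 2)/(c 2 - c 1)).
  assert (Lb : LIM b beta).
  { assert (H := lim_lin (T 1) (T 2) _ _ ((n-2)/(c 2 - c 1)) (-(n-2)/(c 2 - c 1))
       ((- A0 1 + A0 2 + c 1 * B0 1 - c 2 * B0 2)/(c 2 - c 1)) (Hw 1 Rlt_0_1) (Hw 2 ltac:(lra))).
    replace beta with ((n - 2) / (c 2 - c 1) * (zeta - v 1) +
     - (n - 2) / (c 2 - c 1) * (zeta - v 2) +
     (- A0 1 + A0 2 + c 1 * B0 1 - c 2 * B0 2) / (c 2 - c 1)) by (unfold beta; field; lra).
    eapply (lim_ext _ b _ 1 Rlt_0_1). 2: exact H.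
    intros e He. simpl.
    assert (K1 := Key 1 e Rlt_0_1 (proj1 He)). assert (K2 := Key 2 e ltac:(lra) (proj1 He)).
    rewrite c1 in *.
    replace ((n - 2) / (c 2 - 1) * T 1 e + - (n - 2) / (c 2 - 1) * T 2 e +
      (- A0 1 + A0 2 + 1 * B0 1 - c 2 * B0 2) / (c 2 - 1)) with
      (((n - 2) * T 1 e - (n - 2) * T 2 e + (- A0 1 + A0 2 + 1 * B0 1 - c 2 * B0 2)) / (c 2 - 1))
      by (field; lra).
    rewrite K1, K2. field. lra. }
  set (alpha0 := (n-2) * (zeta - v 1) - A0 1 + c 1 * (beta + B0 1)).
  assert (La : LIM a alpha0).
  { assert (H := lim_lin (T 1) b _ _ (n-2) (c 1) (- A0 1 + c 1 * B0 1) (Hw 1 Rlt_0_1) Lb).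
    replace alpha0 with ((n - 2) * (zeta - v 1) + c 1 * beta + (- A0 1 + c 1 * B0 1))
      by (unfold alpha0; ring).
    eapply (lim_ext _ a _ 1 Rlt_0_1). 2: exact H.
    intros e He. simpl. rewrite (Key 1 e Rlt_0_1 (proj1 He)). ring. }
  assert (Hform : forall r, 0 < r -> v r = zeta - (alpha0 + A0 r - c r * (beta + B0 r)) / (n-2)).
  { intros r Hr.
    assert (H := lim_lin a b _ _ (/(n-2)) (- c r / (n-2)) ((A0 r - c r * B0 r)/(n-2)) La Lb).
    assert (H' : LIM (T r) (/ (n - 2) * alpha0 + - c r / (n - 2) * beta + (A0 r - c r * B0 r) / (n - 2))).
    { eapply (lim_ext _ (T r) _ 1 Rlt_0_1). 2: exact H.
      intros e He. simpl. apply (Rmult_eq_reg_l (n-2)); [|lra].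
      rewrite (Key r e Hr (proj1 He)). field. lra. }
    pose proof (lim_uniq _ _ _ (Hw r Hr) H').
    apply (Rmult_eq_reg_l (n-2)); [|lra].
    replace ((n - 2) * (zeta - (alpha0 + A0 r - c r * (beta + B0 r)) / (n - 2))) with
      ((n-2) * zeta - (alpha0 + A0 r - c r * (beta + B0 r))) by (field; lra).
    replace (v r) with (zeta - (zeta - v r)) by ring. rewrite H1. field. lra. }
  exists (fun r => beta + B0 r). split.
  - intros r Hr.
    assert (H := lim_lin b b _ _ 1 0 (B0 r) Lb Lb).
    replace (beta + B0 r) with (1 * beta + 0 * beta + B0 r) by ring.
    eapply (lim_ext _ _ _ (Rmin 1 r) ltac:(apply Rmin_glb_lt; lra)). 2: exact H.
    intros e He. simpl. unfold b, B0.
    rewrite <- (RInt_Chasles hb e 1 r) by (apply ex_RInt_pos; auto; lra).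
    simpl. unfold plus; simpl. ring.
  - intros r Hr.
    apply (D_ext_loc (fun r => zeta - / (n-2) * (alpha0 + A0 r - c r * (beta + B0 r)))).
    { exists (mkposreal r Hr). intros t Ht. simpl in Ht. apply Rabs_lt_between in Ht.
      rewrite Hform by lra. unfold Rdiv. ring. }
    eapply D_eq.
    { apply D_minus. apply D_const. apply D_scal. apply D_minus. apply D_plus. apply D_const.
      apply is_derive_RInt1; auto.
      apply D_mult. apply is_derive_Rpower; auto. apply D_plus. apply D_const.
      apply is_derive_RInt1; auto. }
    unfold hs, hb, c.
    replace (2 - n - 1) with (1 - n) by ring.
    replace (Rpower r (2 - n) * (Rpower r (n - 1) * g r)) with (r * g r)
      by (rewrite <- Rmult_assoc, Rpower_kern; auto).
    rewrite !Rplus_0_l.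
    replace (Rpower r (2 - n) * (Rpower r (n - 1) * g r)) with (r * g r)
      by (rewrite <- Rmult_assoc, Rpower_kern; auto).
    field. lra.
Qed.

Lemma kern_bounds (n r s : R) : 2 < n -> 0 < s <= r ->
  0 <= kern n r s /\ kern n r s <= s / (n - 2).
Proof.
  intros Hn Hs. unfold kern.
  assert (Rpower r (2-n) <= Rpower s (2-n)).
  { replace (2-n) with (-(n-2)) by ring. rewrite !Rpower_Ropp.
    apply Rinv_le_contravar. apply Rpower_pos. apply Rle_Rpower_l; lra. }
  pose proof (Rpower_pos s (n-1)). pose proof (Rpower_pos r (2-n)).
  split.
  - apply Rmult_le_pos; [|lra]. unfold Rdiv. apply Rmult_le_pos; [lra|]. left; apply Rinv_0_lt_compat; lra.
  - replace ((Rpower s (2 - n) - Rpower r (2 - n)) / (n - 2) * Rpower s (n - 1)) with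
      ((Rpower s (2-n) * Rpower s (n-1) - Rpower r (2 - n) * Rpower s (n-1)) / (n-2)) by (field; lra).
    rewrite Rpower_kern by lra. unfold Rdiv. apply Rmult_le_compat_r.
    left; apply Rinv_0_lt_compat; lra. nra.
Qed.

Lemma RInt_comb (h1 h2 : R -> R) (a b c1 c2 : R) :
  ex_RInt h1 a b -> ex_RInt h2 a b ->
  RInt (fun s => c1 * h1 s + c2 * h2 s) a b = c1 * RInt h1 a b + c2 * RInt h2 a b.
Proof.
  intros E1 E2. apply is_RInt_unique.
  exact (is_RInt_plus (V:=R_NormedModule) _ _ a b _ _
    (is_RInt_scal (V:=R_NormedModule) _ a b c1 _ (RInt_correct (V:=R_CompleteNormedModule) _ a b E1))
    (is_RInt_scal (V:=R_NormedModule) _ a b c2 _ (RInt_correct (V:=R_CompleteNormedModule) _ a b E2))).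
Qed.

Lemma ex_RInt_pow (a e r : R) : 0 < e -> 0 < r -> ex_RInt (fun s => Rpower s a) e r.
Proof. intros. apply ex_RInt_pos; auto. intros; apply continuous_Rpower; auto. Qed.

Lemma IB (h : R -> R) (a1 a2 b1 b2 e r R0 : R) :
  -1 < b1 -> -1 < b2 -> 0 <= a1 -> 0 <= a2 -> 0 < e -> e <= r -> r <= R0 ->
  ex_RInt h e r ->
  (forall s, e < s < r -> h s <= a1 * Rpower s b1 + a2 * Rpower s b2) ->
  RInt h e r <= a1 * Rpower R0 (b1+1) / (b1+1) + a2 * Rpower R0 (b2+1) / (b2+1).
Proof.
  intros Hb1 Hb2 Ha1 Ha2 He Her HrR Eh Hh.
  apply Rle_trans with (RInt (fun s => a1 * Rpower s b1 + a2 * Rpower s b2) e r).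
  { apply RInt_le; auto.
    apply ex_RInt_pos; try lra. intros. apply (continuous_plus (fun s => a1 * Rpower s b1) (fun s => a2 * Rpower s b2)).
      apply (continuous_mult (fun _ => a1)). apply continuous_const. apply continuous_Rpower; auto.
      apply (continuous_mult (fun _ => a2)). apply continuous_const. apply continuous_Rpower; auto. }
  rewrite RInt_comb by (apply ex_RInt_pow; lra).
  assert (forall b, -1 < b -> RInt (fun s => Rpower s b) e r <= Rpower R0 (b+1) / (b+1)).
  { intros b Hb. apply Rle_trans with (Rpower r (b+1) / (b+1)). apply RInt_pow_le; auto.
    unfold Rdiv. apply Rmult_le_compat_r. left; apply Rinv_0_lt_compat; lra.
    apply Rle_Rpower_l; lra. }
  pose proof (H b1 Hb1). pose proof (H b2 Hb2).
  unfold Rdiv in *. 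
  apply Rplus_le_compat; rewrite Rmult_assoc; apply Rmult_le_compat_l; auto.
Qed.

Lemma iter_bound (d E : R -> R) (eta M0 R0 : R) :
  0 < R0 -> (forall r, 0 < r <= R0 -> 0 < E r) -> (forall r, 0 < r <= R0 -> d r <= M0 * E r) ->
  (forall M, (forall r, 0 < r <= R0 -> d r <= M * E r) -> forall r, 0 < r <= R0 -> d r <= (eta + M/2) * E r) ->
  forall r, 0 < r <= R0 -> d r <= 2 * eta * E r.
Proof.
  intros HR HE H0 Hstep.
  set (Ens := fun x => exists r, (0 < r <= R0) /\ x = d r / E r).
  assert (Hb : bound Ens).
  { exists M0. intros x [r [Hr ->]]. specialize (H0 r Hr). specialize (HE r Hr).
    apply (Rmult_le_reg_r (E r)); auto. unfold Rdiv. rewrite Rmult_assoc, Rinv_l; lra. }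
  assert (Hne : exists x, Ens x) by (exists (d R0 / E R0); exists R0; split; auto; lra).
  destruct (completeness Ens Hb Hne) as [S [HS1 HS2]].
  assert (HdS : forall r, 0 < r <= R0 -> d r <= S * E r).
  { intros r Hr. assert (d r / E r <= S) by (apply HS1; exists r; auto).
    specialize (HE r Hr). apply (Rmult_le_compat_r (E r)) in H; [|lra].
    unfold Rdiv in H. rewrite Rmult_assoc, Rinv_l, Rmult_1_r in H; lra. }
  assert (HS3 : S <= eta + S / 2).
  { apply HS2. intros x [r [Hr ->]]. pose proof (Hstep S HdS r Hr). specialize (HE r Hr).
    apply (Rmult_le_reg_r (E r)); auto. unfold Rdiv at 1. rewrite Rmult_assoc, Rinv_l; lra. }
  intros r Hr. specialize (HdS r Hr). specialize (HE r Hr).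
  apply Rle_trans with (S * E r); auto. apply Rmult_le_compat_r; lra.
Qed.

Lemma cont_kg (n r : R) (g : R -> R) s : 0 < s -> continuous g s ->
  continuous (fun s => kern n r s * g s) s.
Proof.
  intros Hs Hg. apply (continuous_mult (kern n r) g); auto. unfold kern.
  apply (continuous_mult (fun s => (Rpower s (2 - n) - Rpower r (2 - n)) / (n - 2)) (fun s => Rpower s (n-1))).
  - apply (continuous_mult (fun s => (Rpower s (2 - n) - Rpower r (2 - n))) (fun _ => / (n-2))).
    apply (continuous_minus (fun s => Rpower s (2-n)) (fun _ => Rpower r (2-n))).
    apply continuous_Rpower; auto. apply continuous_const. apply continuous_const.
  - apply continuous_Rpower; auto.
Qed.

Lemma WF_le n p mu Kf f zeta v :
  2 < n -> 1 < p ->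
  (forall s, 0 < s -> continuous Kf s) -> (forall s, 0 < s -> continuous f s) ->
  (forall s, 0 < s -> 0 <= gF p mu Kf f v s) ->
  WF n p mu Kf f zeta v -> forall r, 0 < r -> v r <= zeta.
Proof.
  intros Hn Hp HK Hf Hg [H0 [Hc [Hv Hw]]] r Hr.
  assert (0 <= zeta - v r); [|lra].
  apply (lim_ge _ _ 0 r Hr (Hw r Hr)).
  intros e He. apply RInt_ge_0; try lra.
  - apply ex_RInt_pos; try lra. intros. apply cont_kg; auto. apply continuous_gF; auto.
  - intros x Hx. apply Rmult_le_pos. apply (kern_bounds n r x); auto; lra. apply Hg; lra.
Qed.

Lemma WF_bound n p mu Kf f zeta v a1 a2 b1 b2 R0 :
  2 < n -> 1 < p -> -1 < b1 -> -1 < b2 -> 0 <= a1 -> 0 <= a2 ->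
  (forall s, 0 < s -> continuous Kf s) -> (forall s, 0 < s -> continuous f s) ->
  (forall s, 0 < s -> 0 <= gF p mu Kf f v s) ->
  (forall s, 0 < s <= R0 -> s * gF p mu Kf f v s <= a1 * Rpower s b1 + a2 * Rpower s b2) ->
  WF n p mu Kf f zeta v -> forall r, 0 < r <= R0 ->
  zeta - v r <= (a1 * Rpower R0 (b1+1) / (b1+1) + a2 * Rpower R0 (b2+1) / (b2+1)) / (n-2).
Proof.
  intros Hn Hp Hb1 Hb2 Ha1 Ha2 HK Hf Hg Hgb [H0 [Hc [Hv Hw]]] r Hr.
  apply (lim_le _ _ _ r (proj1 Hr) (Hw r (proj1 Hr))).
  intros e He.
  replace ((a1 * Rpower R0 (b1 + 1) / (b1 + 1) + a2 * Rpower R0 (b2 + 1) / (b2 + 1)) / (n - 2))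
    with ((a1/(n-2)) * Rpower R0 (b1 + 1) / (b1 + 1) + (a2/(n-2)) * Rpower R0 (b2 + 1) / (b2 + 1))
    by (field; lra).
  apply IB; try lra.
  - apply Rdiv_le_0_compat; lra.
  - apply Rdiv_le_0_compat; lra.
  - apply ex_RInt_pos; try lra. intros. apply cont_kg; auto. apply continuous_gF; auto.
  - intros s Hs. destruct (kern_bounds n r s Hn ltac:(lra)) as [k1 k2].
    assert (Hgs := Hg s ltac:(lra)). assert (Hb := Hgb s ltac:(lra)).
    apply Rle_trans with (s / (n-2) * gF p mu Kf f v s). apply Rmult_le_compat_r; auto.
    replace (s / (n - 2) * gF p mu Kf f v s) with ((s * gF p mu Kf f v s) / (n-2)) by (field; lra).
    replace (a1 / (n - 2) * Rpower s b1 + a2 / (n - 2) * Rpower s b2) with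
      ((a1 * Rpower s b1 + a2 * Rpower s b2) / (n-2)) by (field; lra).
    unfold Rdiv; apply Rmult_le_compat_r; auto. left; apply Rinv_0_lt_compat; lra.
Qed.

Lemma Rpower_s1 (s a : R) : 0 < s -> s * Rpower s a = Rpower s (1 + a).
Proof. intros. rewrite Rpower_plus, Rpower_1 by auto. auto. Qed.

Lemma exp_weight_int (L a e r : R) : 0 < L -> -2 < a -> 0 < e -> e <= r ->
  RInt (fun s => Rpower s (1 + a) * exp (L * Rpower s (2 + a))) e r <= exp (L * Rpower r (2+a)) / (L * (2 + a)).
Proof.
  intros HL Ha He Her.
  assert (H : is_RInt (fun s => Rpower s (1 + a) * exp (L * Rpower s (2 + a))) e r
     (minus (exp (L * Rpower r (2+a)) / (L * (2 + a))) (exp (L * Rpower e (2+a)) / (L * (2 + a))))).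
  { apply (is_RInt_ext (fun s => / (L * (2 + a)) * ((L * ((2+a) * Rpower s (2 + a - 1))) * exp (L * Rpower s (2 + a))))).
    - intros x Hx. replace (2 + a - 1) with (1 + a) by ring.
      change (/ (L * (2 + a)) * ((L * ((2+a) * Rpower x (1 + a))) * exp (L * Rpower x (2 + a))) =
              Rpower x (1 + a) * exp (L * Rpower x (2 + a))). field. lra.
    - apply (is_RInt_derive (fun s => exp (L * Rpower s (2+a)) / (L * (2 + a)))).
      + intros x Hx. rewrite Rmin_left in Hx by lra.
        eapply D_ext. 2: apply D_scal, (D_comp exp (fun s => L * Rpower s (2+a))).
        2: apply D_exp. 2: apply D_scal, is_derive_Rpower; lra.
        intros t; simpl; unfold Rdiv; ring.
      + intros x Hx. rewrite Rmin_left in Hx by lra.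
        apply (continuous_mult (fun _ => / (L * (2 + a)))); [apply continuous_const|].
        apply (continuous_mult (fun s => L * ((2+a) * Rpower s (2 + a - 1))) (fun s => exp (L * Rpower s (2 + a)))).
        * apply (continuous_mult (fun _ => L)). apply continuous_const.
          apply (continuous_mult (fun _ => 2 + a)). apply continuous_const. apply continuous_Rpower; lra.
        * apply (continuous_comp (fun s => L * Rpower s (2 + a)) exp).
          apply (continuous_mult (fun _ => L)). apply continuous_const. apply continuous_Rpower; lra.
          apply (ex_derive_continuous exp). eexists; apply D_exp. }
  rewrite (is_RInt_unique _ _ _ _ H). unfold minus, plus, opp; simpl.
  assert (0 < exp (L * Rpower e (2 + a)) / (L * (2 + a))).
  { apply Rdiv_lt_0_compat. apply exp_pos. apply Rmult_lt_0_compat; lra. }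
  lra.
Qed.

Lemma RInt_scal_R (h : R -> R) a b c : ex_RInt h a b -> RInt (fun s => c * h s) a b = c * RInt h a b.
Proof. intros. exact (RInt_scal (V:=R_CompleteNormedModule) h a b c H). Qed.

Lemma exp_le (x y : R) : x <= y -> exp x <= exp y.
Proof. intros [H|H]. left; apply exp_increasing; auto. subst; lra. Qed.

Lemma exp_ge1 (x : R) : 0 <= x -> 1 <= exp x.
Proof. intros. pose proof (exp_ineq1_le x). lra. Qed.

Lemma abs_RInt_le_g (h1 h2 : R -> R) (e r : R) : e <= r -> ex_RInt h1 e r -> ex_RInt h2 e r ->
  (forall s, e < s < r -> Rabs (h1 s) <= h2 s) -> Rabs (RInt h1 e r) <= RInt h2 e r.
Proof.
  intros Her E1 E2 H.
  apply Rle_trans with (RInt (fun t => Rabs (h1 t)) e r).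
  apply abs_RInt_le; auto.
  apply RInt_le; auto. apply (ex_RInt_norm h1); auto.
Qed.

Lemma COMP n p mu k0 alpha nu zeta R0 eps0 C1 K1 f1 v1 v2 :
  2 < n -> 1 < p -> -2 < alpha -> -2 < nu -> 0 < k0 -> 0 < zeta -> 0 < R0 -> 0 <= eps0 -> 0 <= C1 -> 0 <= mu ->
  (forall s, 0 < s -> continuous K1 s) -> (forall s, 0 < s -> continuous f1 s) ->
  (forall s, 0 < s -> 0 <= K1 s) -> (forall s, 0 < s -> 0 <= f1 s) ->
  (forall s, 0 < s <= R0 -> Rabs (K1 s - k0 * Rpower s alpha) <= eps0 * Rpower s alpha) ->
  (forall s, 0 < s <= R0 -> mu * f1 s <= C1 * Rpower s nu) ->
  WF n p mu K1 f1 zeta v1 ->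
  WF n p 0 (fun s => k0 * Rpower s alpha) (fun _ => 0) zeta v2 ->
  let eta0 := eps0 * Rpower zeta p * Rpower R0 (2+alpha) / (2+alpha) + C1 * Rpower R0 (2+nu) / (2+nu) in
  let L0 := k0 * p * Rpower zeta (p-1) in
  let X := exp (2 * L0 / (n-2) / (2+alpha) * Rpower R0 (2+alpha)) in
  (forall r, 0 < r <= R0 -> Rabs (v1 r - v2 r) <= 2 * (eta0 / (n-2)) * X) /\
  (forall B1 B2, LIM (fun e => RInt (fun s => Rpower s (n-1) * gF p mu K1 f1 v1 s) e R0) B1 ->
      LIM (fun e => RInt (fun s => Rpower s (n-1) * gF p 0 (fun s => k0 * Rpower s alpha) (fun _ => 0) v2 s) e R0) B2 ->
      Rabs (B1 - B2) <= Rpower R0 (n-2) * (eta0 + L0 * (Rpower R0 (2+alpha)/(2+alpha)) * (2 * (eta0/(n-2)) * X))).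
Proof.
  intros Hn Hp Ha Hnu Hk0 Hz HR0 He0 HC1 Hmu HK1 Hf1 HK1p Hf1p HKb Hfb W1 W2 eta0 L0 X.
  set (K2 := fun s => k0 * Rpower s alpha).
  set (g1 := gF p mu K1 f1 v1). set (g2 := gF p 0 K2 (fun _ => 0) v2).
  assert (HK2 : forall s, 0 < s -> continuous K2 s).
  { intros. apply (continuous_mult (fun _ => k0)). apply continuous_const. apply continuous_Rpower; auto. }
  assert (Hc0 : forall s, 0 < s -> continuous (fun _ : R => 0) s) by (intros; apply continuous_const).
  destruct W1 as [W1a [W1b [W1c W1d]]]. destruct W2 as [W2a [W2b [W2c W2d]]].
  assert (cg1 : forall s, 0 < s -> continuous g1 s) by (intros; apply continuous_gF; auto).
  assert (cg2 : forall s, 0 < s -> continuous g2 s) by (intros; apply continuous_gF; auto).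
  assert (g1p : forall s, 0 < s -> 0 <= g1 s).
  { intros. unfold g1, gF. apply Rplus_le_le_0_compat; apply Rmult_le_pos; auto. apply PP_nonneg. }
  assert (g2p : forall s, 0 < s -> 0 <= g2 s).
  { intros. unfold g2, gF, K2. rewrite Rmult_0_l, Rplus_0_r. apply Rmult_le_pos; [|apply PP_nonneg].
    apply Rmult_le_pos; [lra|]. left; apply Rpower_pos. }
  assert (v1le : forall r, 0 < r -> v1 r <= zeta).
  { apply (WF_le n p mu K1 f1 zeta v1); auto. repeat split; auto. }
  assert (v2le : forall r, 0 < r -> v2 r <= zeta).
  { apply (WF_le n p 0 K2 (fun _ => 0) zeta v2); auto. repeat split; auto. }
  set (d := fun s => Rabs (v1 s - v2 s)).
  assert (cd : forall s, 0 < s -> continuous d s).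
  { intros. apply (continuous_comp (fun s => v1 s - v2 s) Rabs).
    apply (continuous_minus v1 v2); auto. apply continuous_Rabs. }
  assert (PW : forall s, 0 < s <= R0 ->
     s * Rabs (g1 s - g2 s) <= eps0 * Rpower zeta p * Rpower s (1 + alpha) + C1 * Rpower s (1 + nu)
        + L0 * (Rpower s (1 + alpha) * d s)).
  { intros s Hs.
    assert (E1 : g1 s - g2 s = (K1 s - K2 s) * PP p (v1 s) + K2 s * (PP p (v1 s) - PP p (v2 s)) + mu * f1 s).
    { unfold g1, g2, gF. ring. }
    assert (B1 : Rabs ((K1 s - K2 s) * PP p (v1 s)) <= eps0 * Rpower s alpha * Rpower zeta p).
    { rewrite Rabs_mult, (Rabs_pos_eq (PP p (v1 s))) by apply PP_nonneg.
      apply Rmult_le_compat; auto using Rabs_pos, PP_nonneg. apply PP_le; auto; try lra. apply v1le; lra. }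
    assert (B2 : Rabs (K2 s * (PP p (v1 s) - PP p (v2 s))) <= k0 * Rpower s alpha * (p * Rpower zeta (p-1) * d s)).
    { rewrite Rabs_mult. unfold K2. rewrite Rabs_pos_eq.
      2: { apply Rmult_le_pos; [lra|]. left; apply Rpower_pos. }
      apply Rmult_le_compat_l. apply Rmult_le_pos; [lra|]. left; apply Rpower_pos.
      apply PP_lip; try lra; apply v1le || apply v2le; lra. }
    assert (B3 : Rabs (mu * f1 s) <= C1 * Rpower s nu).
    { rewrite Rabs_pos_eq. apply Hfb; auto. apply Rmult_le_pos; auto. apply Hf1p; lra. }
    rewrite E1.
    assert (T : Rabs ((K1 s - K2 s) * PP p (v1 s) + K2 s * (PP p (v1 s) - PP p (v2 s)) + mu * f1 s) <=
      eps0 * Rpower s alpha * Rpower zeta p + k0 * Rpower s alpha * (p * Rpower zeta (p-1) * d s) + C1 * Rpower s nu).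
    { eapply Rle_trans. apply Rabs_triang. apply Rplus_le_compat; auto.
      eapply Rle_trans. apply Rabs_triang. apply Rplus_le_compat; auto. }
    apply (Rmult_le_compat_l s) in T; [|lra].
    eapply Rle_trans; [exact T|].
    rewrite <- !Rpower_s1 by lra. unfold L0. right. ring. }
  assert (cdg : forall s, 0 < s -> continuous (fun s => s * Rabs (g1 s - g2 s)) s).
  { intros. apply (continuous_mult (fun s => s) (fun s => Rabs (g1 s - g2 s))). apply continuous_id.
    apply (continuous_comp (fun s => g1 s - g2 s) Rabs). apply (continuous_minus g1 g2); auto.
    apply continuous_Rabs. }
  assert (cwd : forall s, 0 < s -> continuous (fun s => Rpower s (1 + alpha) * d s) s).
  { intros. apply (continuous_mult (fun s => Rpower s (1 + alpha)) d); auto. apply continuous_Rpower; auto. }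
  assert (JB : forall e r, 0 < e -> e <= r -> r <= R0 ->
     RInt (fun s => s * Rabs (g1 s - g2 s)) e r <= eta0 + L0 * RInt (fun s => Rpower s (1+alpha) * d s) e r).
  { intros e r He Her HrR.
    set (h0 := fun s => eps0 * Rpower zeta p * Rpower s (1 + alpha) + C1 * Rpower s (1 + nu)).
    assert (ch0 : forall s, 0 < s -> continuous h0 s).
    { intros. unfold h0. apply (continuous_plus (fun s => eps0 * Rpower zeta p * Rpower s (1 + alpha)) (fun s => C1 * Rpower s (1 + nu))).
      apply (continuous_mult (fun _ => eps0 * Rpower zeta p)). apply continuous_const. apply continuous_Rpower; auto.
      apply (continuous_mult (fun _ => C1)). apply continuous_const. apply continuous_Rpower; auto. }
    apply Rle_trans with (RInt (fun s => 1 * h0 s + L0 * (Rpower s (1 + alpha) * d s)) e r).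
    { apply RInt_le; auto.
      - apply ex_RInt_pos; auto; lra.
      - apply ex_RInt_pos; try lra. intros. apply (continuous_plus (fun s => 1 * h0 s) (fun s => L0 * (Rpower s (1 + alpha) * d s))).
        apply (continuous_mult (fun _ => 1)). apply continuous_const. auto.
        apply (continuous_mult (fun _ => L0)). apply continuous_const. auto.
      - intros x Hx. rewrite Rmult_1_l. unfold h0. apply PW. lra. }
    rewrite RInt_comb by (apply ex_RInt_pos; auto; lra).
    apply Rplus_le_compat_r. rewrite Rmult_1_l.
    unfold eta0.
    replace (2 + alpha) with (1 + alpha + 1) by ring.
    replace (2 + nu) with (1 + nu + 1) by ring.
    apply IB; try lra.
    - apply Rmult_le_pos; auto. left; apply Rpower_pos.
    - apply ex_RInt_pos; auto; lra.
    - intros; unfold h0; lra. }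
  assert (HL0 : 0 < L0).
  { unfold L0. apply Rmult_lt_0_compat. nra. apply Rpower_pos. }
  set (kap := 2 * L0 / (n-2) / (2+alpha)).
  assert (Hkap : 0 < kap).
  { unfold kap. apply Rdiv_lt_0_compat; [|lra]. apply Rdiv_lt_0_compat; lra. }
  set (E := fun s => exp (kap * Rpower s (2 + alpha))).
  assert (E1 : forall s, 1 <= E s).
  { intros. apply exp_ge1. apply Rmult_le_pos. lra. left; apply Rpower_pos. }
  assert (EX : forall s, 0 < s <= R0 -> E s <= X).
  { intros s Hs. unfold E, X; fold kap. apply exp_le. apply Rmult_le_compat_l. lra. apply Rle_Rpower_l; lra. }
  assert (Heta0 : 0 <= eta0).
  { unfold eta0. apply Rplus_le_le_0_compat; apply Rdiv_le_0_compat; try lra.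
    apply Rmult_le_pos; [|left; apply Rpower_pos]. apply Rmult_le_pos; auto. left; apply Rpower_pos.
    apply Rmult_le_pos; auto. left; apply Rpower_pos. }
  set (eta := eta0 / (n-2)).
  assert (Heta : 0 <= eta) by (apply Rdiv_le_0_compat; lra).
  assert (KD : forall r e, 0 < e -> e <= r -> r <= R0 ->
     Rabs (RInt (fun s => kern n r s * g1 s) e r - RInt (fun s => kern n r s * g2 s) e r) <=
     (eta0 + L0 * RInt (fun s => Rpower s (1+alpha) * d s) e r) / (n-2)).
  { intros r e He Her HrR.
    replace (RInt (fun s => kern n r s * g1 s) e r - RInt (fun s => kern n r s * g2 s) e r) with
      (RInt (fun s => 1 * (kern n r s * g1 s) + (-1) * (kern n r s * g2 s)) e r).
    2: { rewrite RInt_comb. match goal with |- ?a = ?b => change (@eq R a b) end. ring. apply ex_RInt_pos; try lra; intros; apply cont_kg; auto.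
         apply ex_RInt_pos; try lra; intros; apply cont_kg; auto. }
    eapply Rle_trans.
    apply (abs_RInt_le_g _ (fun s => / (n-2) * (s * Rabs (g1 s - g2 s)))); auto.
    - apply ex_RInt_pos; try lra. intros.
      apply (continuous_plus (fun s => 1 * (kern n r s * g1 s)) (fun s => (-1) * (kern n r s * g2 s))).
      apply (continuous_mult (fun _ => 1)). apply continuous_const. apply cont_kg; auto.
      apply (continuous_mult (fun _ => -1)). apply continuous_const. apply cont_kg; auto.
    - apply ex_RInt_pos; try lra. intros.
      apply (continuous_mult (fun _ => / (n-2))). apply continuous_const. auto.
    - intros s Hs. destruct (kern_bounds n r s Hn ltac:(lra)) as [k1 k2].
      replace (1 * (kern n r s * g1 s) + -1 * (kern n r s * g2 s)) with (kern n r s * (g1 s - g2 s)) by ring.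
      rewrite Rabs_mult, (Rabs_pos_eq (kern n r s)) by auto.
      replace (/ (n - 2) * (s * Rabs (g1 s - g2 s))) with (s / (n-2) * Rabs (g1 s - g2 s)) by (field; lra).
      apply Rmult_le_compat_r; auto. apply Rabs_pos.
    - rewrite RInt_scal_R by (apply ex_RInt_pos; auto; lra).
      rewrite Rmult_comm. unfold Rdiv. apply Rmult_le_compat_r.
      left; apply Rinv_0_lt_compat; lra. apply JB; auto. }
  assert (Step : forall M, (forall s, 0 < s <= R0 -> d s <= M * E s) ->
                    forall r, 0 < r <= R0 -> d r <= (eta + M / 2) * E r).
  { intros M HM r Hr.
    assert (HM0 : 0 <= M).
    { specialize (HM r Hr). assert (0 <= d r) by apply Rabs_pos. pose proof (E1 r).
      destruct (Rle_or_lt 0 M); auto. nra. }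
    assert (Hlim := lim_lin _ _ _ _ 1 (-1) 0 (W1d r (proj1 Hr)) (W2d r (proj1 Hr))).
    assert (Hd : d r = Rabs (1 * (zeta - v1 r) + -1 * (zeta - v2 r) + 0)).
    { unfold d. rewrite Rabs_minus_sym. f_equal. ring. }
    rewrite Hd. apply (lim_abs_le _ _ _ r (proj1 Hr) Hlim).
    intros e He.
    replace (1 * RInt (fun s => kern n r s * gF p mu K1 f1 v1 s) e r +
      -1 * RInt (fun s => kern n r s * gF p 0 (fun s => k0 * Rpower s alpha) (fun _ => 0) v2 s) e r + 0)
      with (RInt (fun s => kern n r s * g1 s) e r - RInt (fun s => kern n r s * g2 s) e r) by (unfold g1, g2, K2; ring).
    eapply Rle_trans. apply KD; lra.
    assert (I1 : RInt (fun s => Rpower s (1 + alpha) * d s) e r <= M * (E r / (kap * (2 + alpha)))).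
    { apply Rle_trans with (RInt (fun s => M * (Rpower s (1 + alpha) * E s)) e r).
      - apply RInt_le; try lra.
        + apply ex_RInt_pos; auto; lra.
        + apply ex_RInt_pos; try lra. intros. apply (continuous_mult (fun _ => M)). apply continuous_const.
          apply (continuous_mult (fun s => Rpower s (1 + alpha)) E). apply continuous_Rpower; auto.
          apply (continuous_comp (fun s => kap * Rpower s (2 + alpha)) exp).
          apply (continuous_mult (fun _ => kap)). apply continuous_const. apply continuous_Rpower; auto.
          apply (ex_derive_continuous exp). eexists; apply D_exp.
        + intros x Hx. replace (M * (Rpower x (1 + alpha) * E x)) with (Rpower x (1 + alpha) * (M * E x)) by ring.
          apply Rmult_le_compat_l. left; apply Rpower_pos. apply HM. lra.
      - rewrite RInt_scal_R.
        2: { apply ex_RInt_pos; try lra. intros.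
          apply (continuous_mult (fun s => Rpower s (1 + alpha)) E). apply continuous_Rpower; auto.
          apply (continuous_comp (fun s => kap * Rpower s (2 + alpha)) exp).
          apply (continuous_mult (fun _ => kap)). apply continuous_const. apply continuous_Rpower; auto.
          apply (ex_derive_continuous exp). eexists; apply D_exp. }
        apply Rmult_le_compat_l; auto. apply exp_weight_int; lra. }
    apply Rle_trans with ((eta0 + L0 * (M * (E r / (kap * (2 + alpha))))) / (n - 2)).
    { unfold Rdiv at 1 3. apply Rmult_le_compat_r. left; apply Rinv_0_lt_compat; lra.
      apply Rplus_le_compat_l. apply Rmult_le_compat_l; lra. }
    replace ((eta0 + L0 * (M * (E r / (kap * (2 + alpha))))) / (n - 2)) with (eta + M / 2 * E r).
    2: { unfold eta, kap. field. repeat split; lra. }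
    pose proof (E1 r). nra. }
  set (M0 := ((k0 + eps0) * Rpower zeta p * Rpower R0 (1 + alpha + 1) / (1 + alpha + 1) + C1 * Rpower R0 (1 + nu + 1) / (1 + nu + 1)) / (n - 2)
           + (k0 * Rpower zeta p * Rpower R0 (1 + alpha + 1) / (1 + alpha + 1) + 0 * Rpower R0 (1 + nu + 1) / (1 + nu + 1)) / (n - 2)).
  assert (Hb1 : forall r, 0 < r <= R0 -> zeta - v1 r <= ((k0 + eps0) * Rpower zeta p * Rpower R0 (1 + alpha + 1) / (1 + alpha + 1) + C1 * Rpower R0 (1 + nu + 1) / (1 + nu + 1)) / (n - 2)).
  { apply (WF_bound n p mu K1 f1 zeta v1); try lra; auto.
    - apply Rmult_le_pos. lra. left; apply Rpower_pos.
    - intros s Hs. fold g1. unfold g1, gF.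
      assert (K1 s <= (k0 + eps0) * Rpower s alpha).
      { specialize (HKb s Hs). apply Rabs_le_between in HKb. lra. }
      assert (PP p (v1 s) <= Rpower zeta p) by (apply PP_le; try lra; apply v1le; lra).
      rewrite <- !Rpower_s1 by lra.
      assert (mu * f1 s <= C1 * Rpower s nu) by (apply Hfb; auto).
      pose proof (PP_nonneg p (v1 s)). pose proof (HK1p s ltac:(lra)). pose proof (Rpower_pos s alpha).
      assert (K1 s * PP p (v1 s) <= (k0 + eps0) * Rpower s alpha * Rpower zeta p).
      { apply Rmult_le_compat; auto. }
      nra.
    - repeat split; auto. }
  assert (Hb2 : forall r, 0 < r <= R0 -> zeta - v2 r <= (k0 * Rpower zeta p * Rpower R0 (1 + alpha + 1) / (1 + alpha + 1) + 0 * Rpower R0 (1 + nu + 1) / (1 + nu + 1)) / (n - 2)).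
  { apply (WF_bound n p 0 K2 (fun _ => 0) zeta v2); try lra; auto.
    - apply Rmult_le_pos. lra. left; apply Rpower_pos.
    - intros s Hs. fold g2. unfold g2, gF, K2.
      assert (PP p (v2 s) <= Rpower zeta p) by (apply PP_le; try lra; apply v2le; lra).
      rewrite <- !Rpower_s1 by lra.
      pose proof (PP_nonneg p (v2 s)). pose proof (Rpower_pos s alpha). pose proof (Rpower_pos s nu).
      assert (k0 * Rpower s alpha * PP p (v2 s) <= k0 * Rpower s alpha * Rpower zeta p).
      { apply Rmult_le_compat_l; auto. nra. }
      nra.
    - repeat split; auto. }
  assert (Hd0 : forall s, 0 < s <= R0 -> d s <= M0 * E s).
  { intros s Hs. specialize (Hb1 s Hs). specialize (Hb2 s Hs).
    assert (v1 s <= zeta) by (apply v1le; lra). assert (v2 s <= zeta) by (apply v2le; lra).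
    assert (d s <= M0).
    { unfold d, M0. apply Rabs_le. lra. }
    assert (0 <= M0) by (pose proof (Rabs_pos (v1 s - v2 s)); unfold d in *; lra).
    pose proof (E1 s). nra. }
  assert (Main : forall r, 0 < r <= R0 -> d r <= 2 * eta * E r).
  { apply (iter_bound d E eta M0 R0); auto.
    intros r _. pose proof (E1 r). lra. }
  assert (P1 : forall r, 0 < r <= R0 -> d r <= 2 * eta * X).
  { intros r Hr. specialize (Main r Hr). specialize (EX r Hr).
    apply Rle_trans with (2 * eta * E r); auto. apply Rmult_le_compat_l; lra. }
  split; [exact P1|].
  intros B1 B2 HB1 HB2.
  assert (Hlim := lim_lin _ _ _ _ 1 (-1) 0 HB1 HB2).
  replace (B1 - B2) with (1 * B1 + -1 * B2 + 0) by ring.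
  apply (lim_abs_le _ _ _ R0 HR0 Hlim).
  intros e He.
  assert (ch1 : forall s, 0 < s -> continuous (fun s => Rpower s (n - 1) * g1 s) s).
  { intros. apply (continuous_mult (fun s => Rpower s (n-1)) g1); auto. apply continuous_Rpower; auto. }
  assert (ch2 : forall s, 0 < s -> continuous (fun s => Rpower s (n - 1) * g2 s) s).
  { intros. apply (continuous_mult (fun s => Rpower s (n-1)) g2); auto. apply continuous_Rpower; auto. }
  change (Rabs (1 * RInt (fun s => Rpower s (n - 1) * g1 s) e R0 + -1 * RInt (fun s => Rpower s (n - 1) * g2 s) e R0 + 0)
    <= Rpower R0 (n - 2) * (eta0 + L0 * (Rpower R0 (2 + alpha) / (2 + alpha)) * (2 * (eta0 / (n - 2)) * X))).
  rewrite Rplus_0_r, <- RInt_comb by (apply ex_RInt_pos; auto; lra).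
  eapply Rle_trans.
  apply (abs_RInt_le_g _ (fun s => Rpower R0 (n-2) * (s * Rabs (g1 s - g2 s)))); try lra.
  - apply ex_RInt_pos; try lra. intros.
    apply (continuous_plus (fun s => 1 * (Rpower s (n-1) * g1 s)) (fun s => (-1) * (Rpower s (n-1) * g2 s))).
    apply (continuous_mult (fun _ => 1)). apply continuous_const. auto.
    apply (continuous_mult (fun _ => -1)). apply continuous_const. auto.
  - apply ex_RInt_pos; try lra. intros.
    apply (continuous_mult (fun _ => Rpower R0 (n-2))). apply continuous_const. auto.
  - intros s Hs.
    replace (1 * (Rpower s (n - 1) * g1 s) + -1 * (Rpower s (n - 1) * g2 s)) with (Rpower s (n-1) * (g1 s - g2 s)) by ring.
    rewrite Rabs_mult, (Rabs_pos_eq (Rpower s (n-1))) by (left; apply Rpower_pos).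
    replace (Rpower s (n-1)) with (Rpower s (n-2) * s).
    2: { replace (n-1) with ((n-2)+1) by ring. rewrite Rpower_plus, Rpower_1 by lra. auto. }
    rewrite Rmult_assoc. apply Rmult_le_compat_r.
    apply Rmult_le_pos; [lra|apply Rabs_pos]. apply Rle_Rpower_l; lra.
  - rewrite RInt_scal_R by (apply ex_RInt_pos; auto; lra).
    apply Rmult_le_compat_l. left; apply Rpower_pos.
    eapply Rle_trans. apply JB; lra.
    rewrite Rmult_assoc. apply Rplus_le_compat_l. apply Rmult_le_compat_l; [lra|].
    apply Rle_trans with (RInt (fun s => (2 * eta * X) * Rpower s (1 + alpha)) e R0).
    + apply RInt_le; try lra.
      * apply ex_RInt_pos; auto; lra.
      * apply ex_RInt_pos; try lra. intros. apply (continuous_mult (fun _ => 2 * eta * X)). apply continuous_const.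
        apply continuous_Rpower; auto.
      * intros x Hx. rewrite (Rmult_comm (2 * eta * X)). apply Rmult_le_compat_l. left; apply Rpower_pos. apply P1. lra.
    + rewrite RInt_scal_R by (apply ex_RInt_pow; lra).
      rewrite Rmult_comm. apply Rmult_le_compat_r.
      { fold eta. apply Rmult_le_pos; [lra|]. unfold X; left; apply exp_pos. }
      replace (2 + alpha) with (1 + alpha + 1) by ring.
      apply Rle_trans with (Rpower R0 (1 + alpha + 1) / (1 + alpha + 1)); [|lra].
      apply RInt_pow_le; lra.
Qed.


Lemma UNIQ n p k0 alpha zeta v1 v2 :
  2 < n -> 1 < p -> -2 < alpha -> 0 < k0 -> 0 < zeta ->
  WF n p 0 (fun s => k0 * Rpower s alpha) (fun _ => 0) zeta v1 ->
  WF n p 0 (fun s => k0 * Rpower s alpha) (fun _ => 0) zeta v2 ->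
  forall r, 0 < r -> v1 r = v2 r.
Proof.
  intros Hn Hp Ha Hk Hz W1 W2 r Hr.
  destruct (COMP n p 0 k0 alpha 0 zeta r 0 0 (fun s => k0 * Rpower s alpha) (fun _ => 0) v1 v2
     Hn Hp Ha ltac:(lra) Hk Hz Hr ltac:(lra) ltac:(lra) ltac:(lra)) as [H1 _]; auto.
  - intros. apply (continuous_mult (fun _ => k0)). apply continuous_const. apply continuous_Rpower; auto.
  - intros. apply continuous_const.
  - intros. apply Rmult_le_pos; [lra|]. left; apply Rpower_pos.
  - intros; lra.
  - intros. rewrite Rminus_diag, Rabs_R0. lra.
  - intros. lra.
  - specialize (H1 r ltac:(lra)). simpl in H1.
    replace (0 * Rpower zeta p * Rpower r (2 + alpha) / (2 + alpha) + 0 * Rpower r (2 + 0) / (2 + 0)) with 0 in H1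
      by (field; lra).
    replace (2 * (0 / (n - 2)) * exp (2 * (k0 * p * Rpower zeta (p - 1)) / (n - 2) / (2 + alpha) * Rpower r (2 + alpha)))
      with 0 in H1 by (field; lra).
    pose proof (Rabs_pos (v1 r - v2 r)).
    assert (Rabs (v1 r - v2 r) = 0) by lra. apply Rabs_eq_0 in H0. lra.
Qed.

Lemma lam_right (lam : R) : 0 < lam -> filterlim (fun e => lam * e) (at_right 0) (at_right 0).
Proof.
  intros Hl P [d Hd]. assert (hd : 0 < d / lam) by (apply Rdiv_lt_0_compat; [apply cond_pos|auto]).
  exists (mkposreal _ hd). intros y Hy Hy0. apply Hd.
  - assert (Hy2 : Rabs (y - 0) < d / lam) by exact Hy.
    change (Rabs (lam * y - 0) < d). rewrite Rminus_0_r in *. rewrite Rabs_mult, Rabs_pos_eq by lra.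
    apply (Rmult_lt_compat_l lam) in Hy2; auto. unfold Rdiv in Hy2.
    rewrite <- Rmult_assoc, (Rmult_comm lam d), Rmult_assoc, Rinv_r, Rmult_1_r in Hy2; lra.
  - nra.
Qed.

Lemma RInt_scale (Hf : R -> R) lam a b : ex_RInt Hf (lam * a) (lam * b) ->
  RInt (fun s => lam * Hf (lam * s)) a b = RInt Hf (lam * a) (lam * b).
Proof.
  intros E. apply is_RInt_unique.
  apply (is_RInt_ext (V:=R_NormedModule) (fun y => scal lam (Hf (lam * y + 0)))).
  { intros. rewrite Rplus_0_r. reflexivity. }
  apply (is_RInt_comp_lin (V:=R_NormedModule) Hf lam 0 a b).
  rewrite !Rplus_0_r. apply (RInt_correct (V:=R_CompleteNormedModule)); auto.
Qed.


Lemma kern_scale n lam t s : 2 < n -> 0 < lam -> 0 < t -> 0 < s ->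
  kern n (lam * t) (lam * s) = lam * kern n t s.
Proof.
  intros. unfold kern. rewrite <- !Rpower_mult_distr by auto.
  assert (HL := Rpower_kern n lam H0).
  set (L2 := Rpower lam (2-n)) in *. set (L1 := Rpower lam (n-1)) in *.
  rewrite <- HL. field. lra.
Qed.

Lemma lam_pow (zeta alpha p : R) : 0 < zeta -> -2 < alpha -> 1 < p ->
  Rpower (Rpower zeta (- / theta alpha p)) (2 + alpha) = / Rpower zeta (p - 1).
Proof.
  intros. rewrite Rpower_mult. unfold theta.
  replace (- / ((2 + alpha) / (p - 1)) * (2 + alpha)) with (- (p-1)) by (field; lra).
  apply Rpower_Ropp.
Qed.

Lemma SCALE n p k0 alpha zeta ub :
  2 < n -> 1 < p -> -2 < alpha -> 0 < k0 -> 0 < zeta ->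
  WF n p 0 (fun s => k0 * Rpower s alpha) (fun _ => 0) zeta ub ->
  WF n p 0 (fun s => k0 * Rpower s alpha) (fun _ => 0) 1
     (fun t => / zeta * ub (Rpower zeta (- / theta alpha p) * t)).
Proof.
  intros Hn Hp Ha Hk Hz [W0 [Wl [Wc Wi]]].
  set (lam := Rpower zeta (- / theta alpha p)).
  assert (Hlam : 0 < lam) by apply Rpower_pos.
  assert (HL := lam_pow zeta alpha p Hz Ha Hp). fold lam in HL.
  set (K2 := fun s => k0 * Rpower s alpha).
  assert (HK2 : forall s, 0 < s -> continuous K2 s).
  { intros. apply (continuous_mult (fun _ => k0)). apply continuous_const. apply continuous_Rpower; auto. }
  assert (cw : forall t, 0 < t -> continuous (fun t => / zeta * ub (lam * t)) t).
  { intros. apply (continuous_mult (fun _ => / zeta)). apply continuous_const.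
    apply (continuous_comp (fun t => lam * t) ub).
    apply (continuous_mult (fun _ => lam)). apply continuous_const. apply continuous_id.
    apply Wc. nra. }
  split; [|split; [|split]].
  - rewrite Rmult_0_r, W0. field. lra.
  - replace 1 with (/ zeta * zeta) by (field; lra).
    assert (H1 : LIM (fun t => ub (lam * t)) zeta).
    { unfold LIM; eapply filterlim_comp; [apply lam_right; auto| exact Wl]. }
    apply (lim_cont _ (fun x => / zeta * x) _ H1).
    apply (continuous_mult (fun _ => / zeta)). apply continuous_const. apply continuous_id.
  - exact cw.
  - intros t Ht.
    set (Hf := fun s => kern n (lam * t) s * gF p 0 K2 (fun _ => 0) ub s).
    assert (cHf : forall s, 0 < s -> continuous Hf s).
    { intros. apply cont_kg; auto. apply continuous_gF; auto. intros; apply continuous_const. }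
    assert (L1 := Wi (lam * t) ltac:(nra)). fold Hf in L1.
    assert (L2 : LIM (fun e => RInt Hf (lam * e) (lam * t)) (zeta - ub (lam * t))).
    { unfold LIM in *. eapply (filterlim_comp _ _ _ (fun e => lam * e) (fun e => RInt Hf e (lam * t))). apply lam_right; auto. exact L1. }
    assert (L3 := lim_lin _ _ _ _ (/ zeta) 0 0 L2 L2).
    replace (1 - / zeta * ub (lam * t)) with (/ zeta * (zeta - ub (lam * t)) + 0 * (zeta - ub (lam * t)) + 0)
      by (field; lra).
    eapply (lim_ext _ _ _ t Ht). 2: exact L3.
    intros e He. simpl.
    rewrite <- RInt_scale by (apply ex_RInt_pos; auto; nra).
    rewrite <- RInt_scal_R by (apply ex_RInt_pos; try lra; intros; apply (continuous_mult (fun _ => lam)); [apply continuous_const|];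
       apply (continuous_comp (fun s => lam * s) Hf); [apply (continuous_mult (fun _ => lam)); [apply continuous_const|apply continuous_id]|apply cHf; nra]).
    rewrite Rmult_0_l, !Rplus_0_r.
    apply RInt_ext_R. intros s Hs. rewrite Rmin_left, Rmax_right in Hs by lra.
    unfold Hf, gF, K2. rewrite kern_scale by lra.
    rewrite <- (Rpower_mult_distr lam s) by lra.
    replace (PP p (ub (lam * s))) with (Rpower zeta p * PP p (/ zeta * ub (lam * s)))
      by (rewrite <- PP_mult by lra; f_equal; field; lra).
    replace (Rpower zeta p) with (zeta * Rpower zeta (p-1)).
    2: { replace p with ((p-1)+1) at 2 by ring. rewrite Rpower_plus, Rpower_1 by lra. ring. }
    replace (Rpower lam alpha) with (/ (lam * lam) * / Rpower zeta (p-1)).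
    2: { rewrite <- HL. replace (2 + alpha) with (1 + (1 + alpha)) by ring.
         rewrite Rpower_plus, Rpower_1 by lra. rewrite Rpower_plus, Rpower_1 by lra.
         assert (0 < Rpower lam alpha) by apply Rpower_pos. field; repeat split; lra. }
    assert (0 < Rpower zeta (p-1)) by apply Rpower_pos.
    field. repeat split; lra.
Qed.

Lemma lim_squeeze (F G : R -> R) d : 0 < d -> (forall e, 0 < e < d -> Rabs (F e) <= G e) ->
  LIM G 0 -> LIM F 0.
Proof.
  intros Hd Hb HG P [eps Heps].
  assert (HG' := HG (ball 0 eps) (locally_ball 0 eps)).
  unfold filtermap in *. destruct HG' as [d2 Hd2].
  assert (hm : 0 < Rmin d d2) by (apply Rmin_glb_lt; [lra|apply cond_pos]).
  exists (mkposreal _ hm). intros y Hy Hy0.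
  assert (Hy2 : Rabs (y - 0) < Rmin d d2) by exact Hy. rewrite Rminus_0_r, Rabs_pos_eq in Hy2 by lra.
  apply Heps. assert (Hg := Hd2 y). 
  assert (ball 0 d2 y).
  { change (Rabs (y - 0) < d2). rewrite Rminus_0_r, Rabs_pos_eq by lra. pose proof (Rmin_r d d2). lra. }
  specialize (Hg H Hy0). assert (Hg2 : Rabs (G y - 0) < eps) by exact Hg.
  change (Rabs (F y - 0) < eps). rewrite Rminus_0_r in *.
  assert (Rabs (F y) <= G y) by (apply Hb; split; auto; pose proof (Rmin_l d d2); lra).
  apply Rabs_lt_between in Hg2. lra.
Qed.

Lemma lim_rpow (a : R) : 0 < a -> LIM (fun r => Rpower r a) 0.
Proof.
  intros Ha P [eps Heps].
  assert (hd : 0 < Rpower eps (/ a)) by apply Rpower_pos.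
  exists (mkposreal _ hd). intros y Hy Hy0. apply Heps.
  assert (Hy2 : Rabs (y - 0) < Rpower eps (/ a)) by exact Hy. rewrite Rminus_0_r, Rabs_pos_eq in Hy2 by lra.
  change (Rabs (Rpower y a - 0) < eps). rewrite Rminus_0_r, Rabs_pos_eq by (left; apply Rpower_pos).
  replace (pos eps) with (Rpower (Rpower eps (/ a)) a).
  2: { rewrite Rpower_mult. replace (/ a * a) with 1 by (field; lra). apply Rpower_1. apply cond_pos. }
  apply Rlt_Rpower_l; lra.
Qed.

Lemma POS n p k0 alpha v :
  2 < n -> 1 < p -> -2 < alpha -> 0 < k0 -> n + 2 + 2 * alpha < (n - 2) * p ->
  WF n p 0 (fun s => k0 * Rpower s alpha) (fun _ => 0) 1 v -> forall r, 0 < r -> 0 < v r.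
Proof.
  intros Hn Hp Ha Hk Hpc W.
  set (K2 := fun s => k0 * Rpower s alpha).
  assert (HK2 : forall s, 0 < s -> continuous K2 s).
  { intros. apply (continuous_mult (fun _ => k0)). apply continuous_const. apply continuous_Rpower; auto. }
  assert (Hc0 : forall s, 0 < s -> continuous (fun _ : R => 0) s) by (intros; apply continuous_const).
  destruct (STR n p 0 K2 (fun _ => 0) 1 v Hn Hp HK2 Hc0 W) as [B [LB DV]].
  destruct W as [W0 [Wl [Wc Wi]]].
  set (g := gF p 0 K2 (fun _ => 0) v) in *.
  assert (cg : forall s, 0 < s -> continuous g s) by (intros; apply continuous_gF; auto).
  assert (gp : forall s, 0 < s -> 0 <= g s).
  { intros. unfold g, gF, K2. rewrite Rmult_0_l, Rplus_0_r. apply Rmult_le_pos; [|apply PP_nonneg].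
    apply Rmult_le_pos; [lra|]. left; apply Rpower_pos. }
  assert (vle : forall r, 0 < r -> v r <= 1).
  { apply (WF_le n p 0 K2 (fun _ => 0) 1 v); auto. repeat split; auto. }
  set (hb := fun s => Rpower s (n - 1) * g s).
  assert (chb : forall s, 0 < s -> continuous hb s).
  { intros. apply (continuous_mult (fun s => Rpower s (n-1)) g); auto. apply continuous_Rpower; auto. }
  assert (Bform : forall r, 0 < r -> B r = B 1 + RInt hb 1 r).
  { intros r Hr.
    assert (H := lim_lin _ _ _ _ 1 0 (RInt hb 1 r) (LB 1 Rlt_0_1) (LB 1 Rlt_0_1)).
    assert (H' : LIM (fun e => RInt hb e r) (1 * B 1 + 0 * B 1 + RInt hb 1 r)).
    { eapply (lim_ext _ _ _ (Rmin 1 r) ltac:(apply Rmin_glb_lt; lra)). 2: exact H.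
      intros e He. simpl. assert (e < 1 /\ e < r) by (pose proof (Rmin_l 1 r); pose proof (Rmin_r 1 r); lra).
      rewrite <- (RInt_Chasles hb e 1 r) by (apply ex_RInt_pos; auto; lra).
      simpl. unfold plus; simpl. match goal with |- ?a = ?b => change (@eq R a b) end. unfold hb, g. ring. }
    rewrite (lim_uniq _ _ _ (LB r Hr) H'). ring. }
  assert (DB : forall r, 0 < r -> is_derive B r (hb r)).
  { intros r Hr. apply (D_ext_loc (fun x => B 1 + RInt hb 1 x)).
    { exists (mkposreal r Hr). intros t Ht. simpl in Ht. apply Rabs_lt_between in Ht.
      rewrite (Bform t) by lra. auto. }
    eapply D_eq. apply D_plus. apply D_const. apply is_derive_RInt1; auto. ring. }
  set (b0 := k0 / (n + alpha)).
  assert (Bb : forall r, 0 < r -> 0 <= B r <= b0 * Rpower r (n + alpha)).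
  { intros r Hr. split.
    - apply (lim_ge _ _ _ r Hr (LB r Hr)). intros e He. apply RInt_ge_0; try lra.
      apply ex_RInt_pos; auto; lra.
      intros x Hx. unfold hb. apply Rmult_le_pos; [left; apply Rpower_pos|apply gp; lra].
    - apply (lim_le _ _ _ r Hr (LB r Hr)). intros e He.
      replace (b0 * Rpower r (n + alpha)) with (k0 * Rpower r (n - 1 + alpha + 1) / (n - 1 + alpha + 1) + 0 * Rpower r (0 + 1) / (0 + 1)).
      2: { unfold b0. replace (n - 1 + alpha + 1) with (n + alpha) by ring. field. lra. }
      apply IB; try lra. apply ex_RInt_pos; auto; lra.
      intros s Hs. unfold g, gF, K2. rewrite Rmult_0_l, Rplus_0_r, Rmult_0_l, Rplus_0_r.
      replace (Rpower s (n - 1 + alpha)) with (Rpower s (n-1) * Rpower s alpha) by (rewrite Rpower_plus; auto).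
      assert (PP p (v s) <= 1).
      { rewrite <- (Rpower_1_base p). apply PP_le; try lra. apply vle; lra. }
      pose proof (Rpower_pos s (n-1)). pose proof (Rpower_pos s alpha). pose proof (PP_nonneg p (v s)).
      assert (0 <= Rpower s (n-1) * (k0 * Rpower s alpha)) by (apply Rmult_le_pos; [lra|apply Rmult_le_pos; lra]).
      replace (Rpower s (n - 1) * (k0 * Rpower s alpha * PP p (v s))) with ((Rpower s (n-1) * (k0 * Rpower s alpha)) * PP p (v s)) by ring.
      nra. }
  set (cst := (n + alpha) / (p + 1) - (n - 2) / 2).
  assert (Hcst : cst < 0).
  { unfold cst. apply (Rmult_lt_reg_r (2 * (p + 1))); [lra|].
    rewrite Rmult_0_l. field_simplify; lra. }
  set (Pz := fun r => / 2 * (Rpower r (2 - n) * (B r * B r)) + k0 / (p + 1) * (Rpower r (n + alpha) * PP (p + 1) (v r))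
                      - (n - 2) / 2 * (v r * B r)).
  set (DPz := fun r => k0 * (Rpower r (n - 1) * Rpower r alpha) * PP (p + 1) (v r) * cst).
  assert (DP : forall r, 0 < r -> is_derive Pz r (DPz r)).
  { intros r Hr. eapply D_eq.
    { apply D_minus. apply D_plus.
      - apply D_scal. apply D_mult. apply is_derive_Rpower; auto. apply D_mult; apply DB; auto.
      - apply D_scal. apply D_mult. apply is_derive_Rpower; auto.
        apply (D_comp (PP (p + 1)) v). apply is_derive_PP; lra. apply DV; auto.
      - apply D_scal. apply D_mult. apply DV; auto. apply DB; auto. }
    unfold DPz, hb, g, gF, K2, cst.
    replace (2 - n - 1) with (1 - n) by ring.
    replace (p + 1 - 1) with p by ring.
    replace (Rpower r (n + alpha - 1)) with (Rpower r (n - 1) * Rpower r alpha) by (rewrite <- Rpower_plus; f_equal; ring).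
    replace (Rpower r (n + alpha)) with (r * (Rpower r (n - 1) * Rpower r alpha))
      by (rewrite <- Rpower_plus; rewrite <- (Rpower_1 r) at 1 by auto; rewrite <- Rpower_plus; f_equal; ring).
    rewrite <- (x_PP p (v r)).
    assert (HQ : 0 < Rpower r (n - 1)) by apply Rpower_pos.
    replace (Rpower r (2 - n)) with (r / Rpower r (n - 1)).
    2: { apply (Rmult_eq_reg_r (Rpower r (n - 1))); [|lra]. rewrite (Rpower_kern n r Hr). field. lra. }
    replace (Rpower r (1 - n)) with (/ Rpower r (n - 1)).
    2: { replace (1 - n) with (- (n - 1)) by ring. rewrite Rpower_Ropp. auto. }
    field. lra. }
  assert (DPle : forall r, 0 < r -> DPz r <= 0).
  { intros r Hr. unfold DPz. pose proof (Rpower_pos r (n-1)). pose proof (Rpower_pos r alpha).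
    pose proof (PP_nonneg (p+1) (v r)).
    assert (0 <= k0 * (Rpower r (n - 1) * Rpower r alpha) * PP (p + 1) (v r)).
    { apply Rmult_le_pos; [|lra]. apply Rmult_le_pos; [lra|]. apply Rmult_le_pos; lra. }
    nra. }
  assert (DPlt : forall r, 0 < r -> 0 < v r -> DPz r < 0).
  { intros r Hr Hv. unfold DPz. pose proof (Rpower_pos r (n-1)). pose proof (Rpower_pos r alpha).
    rewrite PP_pos by auto. pose proof (Rpower_pos (v r) (p+1)).
    assert (0 < k0 * (Rpower r (n - 1) * Rpower r alpha) * Rpower (v r) (p + 1)).
    { apply Rmult_lt_0_compat; [|lra]. apply Rmult_lt_0_compat; [lra|]. apply Rmult_lt_0_compat; lra. }
    nra. }
  assert (Pcont : forall r, 0 < r -> continuity_pt Pz r).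
  { intros r Hr. apply continuity_pt_filterlim. apply (ex_derive_continuous Pz). eexists; apply DP; auto. }
  assert (Pmono : forall e r, 0 < e -> e <= r -> Pz r <= Pz e).
  { intros e r He Her.
    destruct (MVT_gen Pz e r DPz) as [c [Hc Hm]].
    - intros x Hx. rewrite Rmin_left in Hx by lra. apply DP; lra.
    - intros x Hx. rewrite Rmin_left in Hx by lra. apply Pcont; lra.
    - rewrite Rmin_left, Rmax_right in Hc by lra.
      assert (DPz c <= 0) by (apply DPle; lra). nra. }
  destruct (Wl (fun x => 1/2 < x)) as [dl Hdl].
  { exists (mkposreal (1/2) ltac:(lra)). intros y Hy. assert (Hy2 : Rabs (y - 1) < 1/2) by exact Hy.
    apply Rabs_lt_between in Hy2. lra. }
  assert (vpos0 : forall t, 0 < t < dl -> 1/2 < v t).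
  { intros t Ht. apply Hdl; [|lra]. change (Rabs (t - 0) < dl). rewrite Rminus_0_r, Rabs_pos_eq; lra. }
  assert (LP : LIM Pz 0).
  { set (c1 := / 2 * (b0 * b0)). set (c2 := k0 / (p + 1) + (n - 2) / 2 * b0).
    assert (Hb0 : 0 < b0) by (unfold b0; apply Rdiv_lt_0_compat; lra).
    assert (L := lim_lin _ _ _ _ c1 c2 0 (lim_rpow (n + 2 + 2 * alpha) ltac:(lra)) (lim_rpow (n + alpha) ltac:(lra))).
    replace (c1 * 0 + c2 * 0 + 0) with 0 in L by ring.
    apply (lim_squeeze _ (fun e => c1 * Rpower e (n + 2 + 2 * alpha) + c2 * Rpower e (n + alpha) + 0) dl (cond_pos dl)); [|exact L].
    intros e He. specialize (vpos0 e He). assert (ve := vle e (proj1 He)).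
    destruct (Bb e (proj1 He)) as [B1 B2].
    set (S := Rpower e (2 - n)) in *. set (T := Rpower e (n + alpha)) in *.
    assert (HS : 0 < S) by apply Rpower_pos. assert (HT : 0 < T) by apply Rpower_pos.
    assert (ST : S * T * T = Rpower e (n + 2 + 2 * alpha)).
    { unfold S, T. rewrite <- !Rpower_plus. f_equal. ring. }
    rewrite <- ST.
    assert (H1 : 0 <= PP (p + 1) (v e) <= 1).
    { split. apply PP_nonneg. apply Rle_trans with (Rpower 1 (p+1)); [apply PP_le; lra|rewrite Rpower_1_base; lra]. }
    assert (Q1 : 0 <= S * (B e * B e) <= S * T * T * (b0 * b0)).
    { split. apply Rmult_le_pos; nra.
      replace (S * T * T * (b0 * b0)) with (S * ((b0 * T) * (b0 * T))) by ring.
      apply Rmult_le_compat_l; [lra|]. apply Rmult_le_compat; lra. }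
    assert (Q2 : 0 <= T * PP (p + 1) (v e) <= T) by (split; nra).
    assert (Q3 : 0 <= v e * B e <= b0 * T) by (split; nra).
    assert (k0 / (p + 1) > 0) by (apply Rdiv_lt_0_compat; lra).
    assert ((n - 2) / 2 > 0) by (apply Rdiv_lt_0_compat; lra).
    unfold Pz. fold S T. unfold c1, c2. apply Rabs_le. split; nra. }
  assert (Ple0 : forall r, 0 < r -> Pz r <= 0).
  { intros r Hr. apply (lim_ge _ _ _ r Hr LP). intros e He. apply Pmono; lra. }
  intros R HR. destruct (Rlt_or_le 0 (v R)) as [h|h]; auto. exfalso.
  assert (PR : 0 <= Pz R).
  { unfold Pz. rewrite (PP_neg (p+1) (v R)) by auto. destruct (Bb R HR).
    pose proof (Rpower_pos R (2-n)).
    assert (0 <= Rpower R (2 - n) * (B R * B R)) by (apply Rmult_le_pos; nra).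
    assert (v R * B R <= 0) by nra.
    assert (0 <= (n-2)/2) by (apply Rdiv_le_0_compat; lra). nra. }
  set (r0 := Rmin dl R / 2).
  assert (hr0 : 0 < r0) by (unfold r0; assert (0 < Rmin dl R) by (apply Rmin_glb_lt; [apply cond_pos|auto]); lra).
  assert (hr0b : 2 * r0 <= R /\ 2 * r0 <= dl) by (unfold r0; pose proof (Rmin_l dl R); pose proof (Rmin_r dl R); lra).
  assert (Z : forall t, 0 < t <= R -> Pz t = 0).
  { intros t Ht. assert (Pz R <= Pz t) by (apply Pmono; lra). pose proof (Ple0 t (proj1 Ht)). lra. }
  assert (D0 : is_derive Pz r0 0).
  { apply (D_ext_loc (fun _ => 0)); [|apply D_const].
    exists (mkposreal r0 hr0). intros t Ht. simpl in Ht. apply Rabs_lt_between in Ht.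
    rewrite Z; auto; lra. }
  assert (D1 := DP r0 hr0).
  apply is_derive_unique in D0. apply is_derive_unique in D1.
  assert (DPz r0 < 0) by (apply DPlt; auto; assert (1/2 < v r0) by (apply vpos0; lra); lra).
  lra.
Qed.

Lemma DEC n p mu Kf f zeta v :
  2 < n -> 1 < p ->
  (forall s, 0 < s -> continuous Kf s) -> (forall s, 0 < s -> continuous f s) ->
  (forall s, 0 < s -> 0 <= gF p mu Kf f v s) ->
  WF n p mu Kf f zeta v -> forall t s, 0 < t -> t <= s -> v s <= v t.
Proof.
  intros Hn Hp HK Hf Hg W t s Ht Hts.
  destruct (STR n p mu Kf f zeta v Hn Hp HK Hf W) as [B [LB DV]].
  assert (Bp : forall r, 0 < r -> 0 <= B r).
  { intros r Hr. apply (lim_ge _ _ _ r Hr (LB r Hr)). intros e He. apply RInt_ge_0; try lra.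
    apply ex_RInt_pos; try lra. intros. apply (continuous_mult (fun s => Rpower s (n-1))).
    apply continuous_Rpower; auto. apply continuous_gF; auto. destruct W as [_ [_ [Wc _]]]. auto.
    intros x Hx. apply Rmult_le_pos; [left; apply Rpower_pos|apply Hg; lra]. }
  destruct (MVT_gen v t s (fun r => - Rpower r (1 - n) * B r)) as [c [Hc Hm]].
  - intros x Hx. rewrite Rmin_left in Hx by lra. apply DV; lra.
  - intros x Hx. rewrite Rmin_left in Hx by lra. apply continuity_pt_filterlim.
    destruct W as [_ [_ [Wc _]]]. apply Wc; lra.
  - rewrite Rmin_left, Rmax_right in Hc by lra.
    pose proof (Rpower_pos c (1 - n)). pose proof (Bp c ltac:(lra)).
    assert (0 <= Rpower c (1 - n) * B c * (s - t)) by (apply Rmult_le_pos; [apply Rmult_le_pos|]; lra).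
    lra.
Qed.

Lemma rpow_small (a eps : R) : 0 < a -> 0 < eps ->
  exists Z, 0 < Z /\ forall z, Z < z -> Rpower z (- a) < eps.
Proof.
  intros Ha He. exists (Rpower eps (- / a)). split. apply Rpower_pos.
  intros z Hz. assert (0 < z) by (pose proof (Rpower_pos eps (- / a)); lra).
  rewrite Rpower_Ropp.
  replace eps with (/ Rpower (Rpower eps (- / a)) a).
  2: { rewrite Rpower_mult. replace (- / a * a) with (- (1)) by (field; lra).
       rewrite Rpower_Ropp, Rpower_1 by auto. field. lra. }
  apply Rinv_lt_contravar. apply Rmult_lt_0_compat; apply Rpower_pos.
  apply Rlt_Rpower_l; auto. split; auto. apply Rpower_pos.
Qed.

Lemma lim_pinfty (F : R -> R) :
  (forall eps, 0 < eps -> exists M, forall x, M < x -> Rabs (F x) <= eps) -> is_lim F p_infty 0.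
Proof.
  intros H P [eps Heps].
  destruct (H (eps / 2) ltac:(destruct eps; simpl; lra)) as [M HM].
  exists M. intros x Hx. apply Heps. change (Rabs (F x - 0) < eps).
  rewrite Rminus_0_r. specialize (HM x Hx). destruct eps; simpl in *; lra.
Qed.

Lemma CORE (n p mu alpha k0 nu : R) (K f : R -> R) (u ub : R -> R -> R) (sigma tau : R) :
  2 < n -> 1 < p -> 0 <= mu -> -2 < alpha -> 0 < k0 -> -2 < nu ->
  (forall r, 0 < r -> continuous K r) -> (forall r, 0 < r -> 0 < K r) ->
  filterlim (fun r => K r / Rpower r alpha) (at_right 0) (locally k0) ->
  (forall r, 0 < r -> continuous f r) -> (forall r, 0 < r -> 0 <= f r) ->
  (exists C delta, 0 < delta /\ forall r, 0 < r < delta -> Rabs (f r) <= C * Rpower r nu) ->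
  (forall zeta, 0 < zeta -> WF n p mu K f zeta (fun r => u r zeta)) ->
  (forall zeta, 0 < zeta -> WF n p 0 (fun s => k0 * Rpower s alpha) (fun _ => 0) zeta (fun r => ub r zeta)) ->
  0 < sigma -> 0 < tau ->
  exists Z, 0 < Z /\ forall zeta, Z < zeta ->
    (forall r, 0 < r <= sigma * Rpower zeta (- / theta alpha p) -> Rabs (u r zeta - ub r zeta) <= tau * zeta) /\
    Rabs (Derive (fun r => u r zeta) (sigma * Rpower zeta (- / theta alpha p))
          - Derive (fun r => ub r zeta) (sigma * Rpower zeta (- / theta alpha p)))
      <= tau * Rpower zeta (1 + / theta alpha p).
Proof.
  intros Hn Hp Hmu Ha Hk Hnu HKc HKp HKa Hfc Hfp HfO Wu Wub Hs Ht.
  set (th := theta alpha p).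
  assert (Hth : 0 < th) by (unfold th, theta; apply Rdiv_lt_0_compat; lra).
  set (X0 := exp (2 * (k0 * p) / (n - 2) / (2 + alpha) * Rpower sigma (2 + alpha))).
  assert (HX0 : 0 < X0) by apply exp_pos.
  set (Y0 := 1 + k0 * p * (Rpower sigma (2 + alpha) / (2 + alpha)) * (2 / (n - 2)) * X0).
  assert (HY0 : 1 <= Y0).
  { unfold Y0. assert (0 <= k0 * p * (Rpower sigma (2 + alpha) / (2 + alpha)) * (2 / (n - 2)) * X0); [|lra].
    pose proof (Rpower_pos sigma (2+alpha)).
    assert (0 < Rpower sigma (2+alpha)/(2+alpha)) by (apply Rdiv_lt_0_compat; lra).
    assert (0 < 2/(n-2)) by (apply Rdiv_lt_0_compat; lra).
    assert (0 < k0*p) by nra.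
    apply Rmult_le_pos; [apply Rmult_le_pos; [apply Rmult_le_pos|]|]; lra. }
  set (rho := Rmin (tau * (n - 2) / (2 * X0)) (tau * sigma / Y0)).
  assert (Hrho : 0 < rho).
  { unfold rho. apply Rmin_glb_lt; apply Rdiv_lt_0_compat; try nra. }
  assert (Hrho1 : rho <= tau * (n - 2) / (2 * X0)) by apply Rmin_l.
  assert (Hrho2 : rho <= tau * sigma / Y0) by apply Rmin_r.
  assert (Hsa : 0 < Rpower sigma (2 + alpha)) by apply Rpower_pos.
  set (eps0 := rho * (2 + alpha) / (2 * Rpower sigma (2 + alpha))).
  assert (He0 : 0 < eps0) by (unfold eps0; apply Rdiv_lt_0_compat; nra).
  destruct (HKa (ball k0 (mkposreal eps0 He0)) (locally_ball _ _)) as [dK HdK].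
  destruct HfO as [C [df [Hdf HfC]]].
  set (C1 := mu * Rmax C 0).
  assert (HC1 : 0 <= C1) by (unfold C1; apply Rmult_le_pos; auto; apply Rmax_r).
  set (a := (2 + nu) / th + 1).
  assert (Hpa : 0 < a) by (unfold a; assert (0 < (2 + nu) / th) by (apply Rdiv_lt_0_compat; lra); lra).
  assert (Hm0 : 0 < Rmin dK df) by (apply Rmin_glb_lt; [apply cond_pos|auto]).
  destruct (rpow_small (/ th) (Rmin dK df / sigma)) as [Z1 [HZ1 HZ1']].
  { apply Rinv_0_lt_compat; auto. } { apply Rdiv_lt_0_compat; auto. }
  assert (Hsn : 0 < Rpower sigma (2 + nu)) by apply Rpower_pos.
  destruct (rpow_small a (rho * (2 + nu) / (2 * (C1 + 1) * Rpower sigma (2 + nu)))) as [Z2 [HZ2 HZ2']]; auto.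
  { apply Rdiv_lt_0_compat. nra. apply Rmult_lt_0_compat; lra. }
  exists (Rmax 1 (Rmax Z1 Z2)). split. { pose proof (Rmax_l 1 (Rmax Z1 Z2)); lra. }
  intros zeta Hz.
  assert (Hz1 : 1 < zeta) by (pose proof (Rmax_l 1 (Rmax Z1 Z2)); lra).
  assert (HzZ1 : Z1 < zeta) by (pose proof (Rmax_r 1 (Rmax Z1 Z2)); pose proof (Rmax_l Z1 Z2); lra).
  assert (HzZ2 : Z2 < zeta) by (pose proof (Rmax_r 1 (Rmax Z1 Z2)); pose proof (Rmax_r Z1 Z2); lra).
  fold th.
  set (lam := Rpower zeta (- / th)).
  assert (Hlam : 0 < lam) by apply Rpower_pos.
  set (RR := sigma * lam).
  assert (HR0 : 0 < RR) by (unfold RR; nra).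
  assert (HR0d : RR < Rmin dK df).
  { unfold RR, lam. specialize (HZ1' zeta HzZ1).
    apply (Rmult_lt_compat_l sigma) in HZ1'; auto. unfold Rdiv in HZ1'.
    rewrite (Rmult_comm (Rmin dK df)), <- Rmult_assoc, Rinv_r, Rmult_1_l in HZ1'; lra. }
  assert (HdK' : dK > RR) by (pose proof (Rmin_l dK df); lra).
  assert (Hdf' : df > RR) by (pose proof (Rmin_r dK df); lra).
  assert (HKb : forall s, 0 < s <= RR -> Rabs (K s - k0 * Rpower s alpha) <= eps0 * Rpower s alpha).
  { intros s Hs0. assert (Hb : ball 0 dK s).
    { change (Rabs (s - 0) < dK). rewrite Rminus_0_r, Rabs_pos_eq; lra. }
    specialize (HdK s Hb ltac:(lra)). assert (Hd2 : Rabs (K s / Rpower s alpha - k0) < eps0) by exact HdK.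
    pose proof (Rpower_pos s alpha).
    replace (K s - k0 * Rpower s alpha) with (Rpower s alpha * (K s / Rpower s alpha - k0)) by (field; lra).
    rewrite Rabs_mult, Rabs_pos_eq by lra. rewrite Rmult_comm. apply Rmult_le_compat_r; lra. }
  assert (Hfb : forall s, 0 < s <= RR -> mu * f s <= C1 * Rpower s nu).
  { intros s Hs0. specialize (HfC s ltac:(lra)). pose proof (Rpower_pos s nu).
    assert (f s <= Rmax C 0 * Rpower s nu).
    { apply Rle_trans with (Rabs (f s)). apply Rle_abs. eapply Rle_trans. exact HfC.
      apply Rmult_le_compat_r; [lra|apply Rmax_l]. }
    unfold C1. rewrite Rmult_assoc. apply Rmult_le_compat_l; auto. }
  pose proof (COMP n p mu k0 alpha nu zeta RR eps0 C1 K f (fun r => u r zeta) (fun r => ub r zeta)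
     Hn Hp Ha Hnu Hk ltac:(lra) HR0 ltac:(lra) HC1 Hmu HKc Hfc ltac:(intros; left; apply HKp; auto) Hfp HKb Hfb
     (Wu zeta ltac:(lra)) (Wub zeta ltac:(lra))) as HC.
  cbv zeta in HC. destruct HC as [P1 P2].
  assert (Hzp : 0 < Rpower zeta (p - 1)) by apply Rpower_pos.
  assert (HR0a : Rpower RR (2 + alpha) = Rpower sigma (2 + alpha) * / Rpower zeta (p - 1)).
  { unfold RR, lam, th. rewrite <- Rpower_mult_distr by auto. rewrite lam_pow; auto; lra. }
  assert (HX : exp (2 * (k0 * p * Rpower zeta (p - 1)) / (n - 2) / (2 + alpha) * Rpower RR (2 + alpha)) = X0).
  { unfold X0. f_equal. rewrite HR0a. field. repeat split; lra. }
  rewrite HX in P1, P2.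
  set (eta0 := eps0 * Rpower zeta p * Rpower RR (2 + alpha) / (2 + alpha) + C1 * Rpower RR (2 + nu) / (2 + nu)) in *.
  assert (Heta : eta0 <= rho * zeta).
  { assert (T1 : eps0 * Rpower zeta p * Rpower RR (2 + alpha) / (2 + alpha) = rho * zeta / 2).
    { rewrite HR0a. replace (Rpower zeta p) with (zeta * Rpower zeta (p - 1)).
      2: { replace p with ((p - 1) + 1) at 2 by ring. rewrite Rpower_plus, Rpower_1 by lra. ring. }
      unfold eps0. field. repeat split; lra. }
    assert (HL : Rpower RR (2 + nu) = Rpower sigma (2 + nu) * (Rpower zeta (- a) * zeta)).
    { unfold RR, lam. rewrite <- Rpower_mult_distr by auto. f_equal.
      rewrite Rpower_mult. rewrite <- (Rpower_1 zeta) at 3 by lra. rewrite <- Rpower_plus.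
      f_equal. unfold a. field. lra. }
    specialize (HZ2' zeta HzZ2).
    assert (T2 : C1 * Rpower RR (2 + nu) / (2 + nu) <= rho * zeta / 2).
    { rewrite HL. pose proof (Rpower_pos zeta (- a)).
      apply Rle_trans with (C1 * (Rpower sigma (2 + nu) * (rho * (2 + nu) / (2 * (C1 + 1) * Rpower sigma (2 + nu)) * zeta)) / (2 + nu)).
      { unfold Rdiv at 1 3. apply Rmult_le_compat_r. left; apply Rinv_0_lt_compat; lra.
        apply Rmult_le_compat_l; auto. apply Rmult_le_compat_l; [lra|]. apply Rmult_le_compat_r; lra. }
      replace (C1 * (Rpower sigma (2 + nu) * (rho * (2 + nu) / (2 * (C1 + 1) * Rpower sigma (2 + nu)) * zeta)) / (2 + nu))
        with ((C1 / (C1 + 1)) * (rho * zeta / 2)) by (field; repeat split; lra).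
      assert (C1 / (C1 + 1) <= 1).
      { apply (Rmult_le_reg_r (C1 + 1)); [lra|]. unfold Rdiv. rewrite Rmult_assoc, Rinv_l; lra. }
      assert (0 <= rho * zeta / 2) by (apply Rdiv_le_0_compat; nra).
      nra. }
    unfold eta0. lra. }
  split.
  - intros r Hr. eapply Rle_trans. apply P1. exact Hr.
    apply Rle_trans with (2 * (rho * zeta / (n - 2)) * X0).
    { apply Rmult_le_compat_r; [lra|]. apply Rmult_le_compat_l; [lra|].
      unfold Rdiv. apply Rmult_le_compat_r; [left; apply Rinv_0_lt_compat; lra|]. auto. }
    replace (2 * (rho * zeta / (n - 2)) * X0) with (rho * (2 * X0 / (n - 2)) * zeta) by (field; lra).
    apply Rmult_le_compat_r; [lra|].
    apply Rle_trans with (tau * (n - 2) / (2 * X0) * (2 * X0 / (n - 2))).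
    apply Rmult_le_compat_r; auto. apply Rdiv_le_0_compat; lra.
    right. field. lra.
  - assert (HK2 : forall s, 0 < s -> continuous (fun s => k0 * Rpower s alpha) s).
    { intros. apply (continuous_mult (fun _ => k0)). apply continuous_const. apply continuous_Rpower; auto. }
    destruct (STR n p mu K f zeta (fun r => u r zeta) Hn Hp HKc Hfc (Wu zeta ltac:(lra))) as [B1 [LB1 DV1]].
    destruct (STR n p 0 (fun s => k0 * Rpower s alpha) (fun _ => 0) zeta (fun r => ub r zeta) Hn Hp HK2
       ltac:(intros; apply continuous_const) (Wub zeta ltac:(lra))) as [B2 [LB2 DV2]].
    fold lam. fold RR.
    rewrite (is_derive_unique _ _ _ (DV1 RR HR0)), (is_derive_unique _ _ _ (DV2 RR HR0)).
    specialize (P2 (B1 RR) (B2 RR) (LB1 RR HR0) (LB2 RR HR0)).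
    assert (HL0 : k0 * p * Rpower zeta (p - 1) * (Rpower RR (2 + alpha) / (2 + alpha)) = k0 * p * (Rpower sigma (2 + alpha) / (2 + alpha))).
    { rewrite HR0a. field. repeat split; lra. }
    rewrite HL0 in P2.
    replace (eta0 + k0 * p * (Rpower sigma (2 + alpha) / (2 + alpha)) * (2 * (eta0 / (n - 2)) * X0)) with (eta0 * Y0) in P2
      by (unfold Y0; field; lra).
    assert (E : - Rpower RR (1 - n) * B1 RR - - Rpower RR (1 - n) * B2 RR = Rpower RR (1 - n) * (B2 RR - B1 RR)) by ring. rewrite E, Rabs_mult, (Rabs_minus_sym (B2 RR)).
    rewrite (Rabs_pos_eq (Rpower RR (1 - n))) by (left; apply Rpower_pos).
    apply Rle_trans with (Rpower RR (1 - n) * (Rpower RR (n - 2) * (eta0 * Y0))).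
    { apply Rmult_le_compat_l; auto. left; apply Rpower_pos. }
    rewrite <- Rmult_assoc, <- Rpower_plus. replace (1 - n + (n - 2)) with (- (1)) by ring.
    rewrite Rpower_Ropp, Rpower_1 by auto.
    assert (Hz2 : tau * Rpower zeta (1 + / th) = tau * sigma * zeta / RR).
    { unfold RR, lam. rewrite Rpower_Ropp, Rpower_plus, Rpower_1 by lra.
      pose proof (Rpower_pos zeta (/ th)). field. repeat split; lra. }
    rewrite Hz2.
    apply Rle_trans with (/ RR * (rho * zeta * Y0)).
    { apply Rmult_le_compat_l. left; apply Rinv_0_lt_compat; auto. apply Rmult_le_compat_r; lra. }
    apply Rle_trans with (/ RR * ((tau * sigma / Y0) * zeta * Y0)).
    { apply Rmult_le_compat_l. left; apply Rinv_0_lt_compat; auto. apply Rmult_le_compat_r; [lra|].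
      apply Rmult_le_compat_r; lra. }
    right. field. repeat split; lra.
Qed.

Theorem lemma3p5
  (N : nat) (mu alpha k0 nu p : R) (K f : R -> R)
  (u ubar : R -> R -> R)
  (HN : (3 <= N)%nat)
  (Hmu : 0 <= mu)
  (* (K0) *)
  (Halpha : -2 < alpha) (Hk0 : 0 < k0)
  (HKcont : forall r, 0 < r -> continuous K r)
  (HKpos : forall r, 0 < r -> 0 < K r)
  (HKasym : filterlim (fun r => K r / Rpower r alpha) (at_right 0) (locally k0))
  (* (F0) *)
  (Hnu : -2 < nu)
  (Hfcont : forall r, 0 < r -> continuous f r)
  (Hfnn : forall r, 0 < r -> 0 <= f r)
  (Hfnz : exists r, 0 < r /\ f r <> 0)
  (HfO : exists C delta, 0 < delta /\
           forall r, 0 < r < delta -> Rabs (f r) <= C * Rpower r nu)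
  (Hp : pS N alpha < p)
  (* u(.,zeta) : regular solution of the perturbed problem *)
  (Hu : forall zeta, 0 < zeta -> regular_solution N p mu K f zeta (fun r => u r zeta))
  (* ubar(.,zeta) : regular solution of ubar'' + (N-1)/r ubar' + k0 r^alpha ubar^p = 0 *)
  (Hubar : forall zeta, 0 < zeta ->
     regular_solution N p 0 (fun r => k0 * Rpower r alpha) (fun _ => 0) zeta
       (fun r => ubar r zeta)) :
  (forall sigma, 0 < sigma ->
     exists zs, 0 < zs /\ forall zeta, zs < zeta ->
       Rbar_le (Finite (sigma * Rpower zeta (- / theta alpha p)))
               (first_zero (fun r => u r zeta)))
  /\
  (forall sigma, 0 < sigma ->
     is_lim (fun zeta =>
               / zeta * Rabs (u (sigma * Rpower zeta (- / theta alpha p)) zeta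
                              - ubar (sigma * Rpower zeta (- / theta alpha p)) zeta))
            p_infty 0)
  /\
  (forall sigma, 0 < sigma ->
     is_lim (fun zeta =>
               Rpower zeta (-1 - / theta alpha p) *
               Rabs (Derive (fun r => u r zeta) (sigma * Rpower zeta (- / theta alpha p))
                     - Derive (fun r => ubar r zeta) (sigma * Rpower zeta (- / theta alpha p))))
            p_infty 0).
Proof.
  set (n := INR N).
  assert (Hn : 2 < n).
  { unfold n. apply le_INR in HN. simpl in HN. lra. }
  assert (Hpc : n + 2 + 2 * alpha < (n - 2) * p).
  { unfold pS in Hp. fold n in Hp. apply (Rmult_lt_compat_r (n - 2)) in Hp; [|lra].
    unfold Rdiv in Hp. rewrite Rmult_assoc, Rinv_l, Rmult_1_r in Hp; lra. }
  assert (Hp1 : 1 < p) by nra.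
  assert (Wu : forall zeta, 0 < zeta -> WF n p mu K f zeta (fun r => u r zeta)).
  { intros. apply RS_WF. auto. }
  assert (Wub : forall zeta, 0 < zeta ->
     WF n p 0 (fun s => k0 * Rpower s alpha) (fun _ => 0) zeta (fun r => ubar r zeta)).
  { intros. apply RS_WF. auto. }
  assert (Core := fun sigma tau => CORE n p mu alpha k0 nu K f u ubar sigma tau Hn Hp1 Hmu Halpha Hk0 Hnu
     HKcont HKpos HKasym Hfcont Hfnn HfO Wu Wub).
  split; [|split].
  - intros sigma Hs.
    set (K2 := fun s => k0 * Rpower s alpha).
    assert (HK2 : forall s, 0 < s -> continuous K2 s).
    { intros. apply (continuous_mult (fun _ => k0)). apply continuous_const. apply continuous_Rpower; auto. }
    assert (Hc0 : forall s, 0 < s -> continuous (fun _ : R => 0) s) by (intros; apply continuous_const).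
    assert (POS1 : forall t, 0 < t -> 0 < ubar t 1).
    { apply (POS n p k0 alpha (fun t => ubar t 1)); auto. apply Wub; lra. }
    assert (DEC1 : forall t, 0 < t <= sigma -> ubar sigma 1 <= ubar t 1).
    { intros t Ht. apply (DEC n p 0 K2 (fun _ => 0) 1 (fun t => ubar t 1)); auto; try lra.
      - intros s0 Hs0. unfold gF, K2. rewrite Rmult_0_l, Rplus_0_r. apply Rmult_le_pos; [|apply PP_nonneg].
        apply Rmult_le_pos; [lra|]. left; apply Rpower_pos.
      - apply Wub; lra. }
    set (m := ubar sigma 1).
    assert (Hm : 0 < m) by (apply POS1; auto).
    assert (SC : forall zeta t, 0 < zeta -> 0 < t ->
       ubar (Rpower zeta (- / theta alpha p) * t) zeta = zeta * ubar t 1).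
    { intros zeta t Hz Ht.
      assert (W := SCALE n p k0 alpha zeta (fun r => ubar r zeta) Hn Hp1 Halpha Hk0 Hz (Wub zeta Hz)).
      pose proof (UNIQ n p k0 alpha 1 _ _ Hn Hp1 Halpha Hk0 Rlt_0_1 W (Wub 1 Rlt_0_1) t Ht) as HU.
      simpl in HU. rewrite <- HU. field. lra. }
    destruct (Core sigma (m / 2) Hs ltac:(lra)) as [Z [HZ HC]].
    exists Z. split; auto. intros zeta Hz.
    destruct (HC zeta Hz) as [H1 _].
    assert (Hzp : 0 < zeta) by lra.
    set (lam := Rpower zeta (- / theta alpha p)) in *.
    assert (Hlam : 0 < lam) by apply Rpower_pos.
    unfold first_zero. destruct (Glb_Rbar_correct (fun r => 0 < r /\ u r zeta = 0)) as [_ Hglb].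
    apply Hglb. intros x [Hx0 Hux]. simpl.
    destruct (Rle_or_lt (sigma * lam) x) as [h|h]; auto. exfalso.
    specialize (H1 x ltac:(lra)).
    assert (Hub : ubar x zeta = zeta * ubar (x / lam) 1).
    { rewrite <- SC; auto. fold lam. f_equal. field. lra. apply Rdiv_lt_0_compat; lra. }
    assert (ubar sigma 1 <= ubar (x / lam) 1).
    { apply DEC1. split. apply Rdiv_lt_0_compat; lra.
      apply (Rmult_le_reg_r lam); auto. unfold Rdiv. rewrite Rmult_assoc, Rinv_l; lra. }
    fold m in H.
    rewrite Hux in H1. apply Rabs_le_between in H1. nra.
  - intros sigma Hs. apply lim_pinfty. intros eps He.
    destruct (Core sigma eps Hs He) as [Z [HZ HC]]. exists Z. intros zeta Hz.
    destruct (HC zeta Hz) as [H1 _].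
    assert (Hzp : 0 < zeta) by lra.
    pose proof (Rpower_pos zeta (- / theta alpha p)).
    specialize (H1 (sigma * Rpower zeta (- / theta alpha p)) ltac:(split; [nra|lra])).
    rewrite Rabs_pos_eq.
    2: { apply Rmult_le_pos. left; apply Rinv_0_lt_compat; auto. apply Rabs_pos. }
    apply (Rmult_le_compat_l (/ zeta)) in H1; [|left; apply Rinv_0_lt_compat; auto].
    replace (/ zeta * (eps * zeta)) with eps in H1 by (field; lra). auto.
  - intros sigma Hs. apply lim_pinfty. intros eps He.
    destruct (Core sigma eps Hs He) as [Z [HZ HC]]. exists Z. intros zeta Hz.
    destruct (HC zeta Hz) as [_ H2].
    assert (Hzp : 0 < zeta) by lra.
    rewrite Rabs_pos_eq.
    2: { apply Rmult_le_pos. left; apply Rpower_pos. apply Rabs_pos. }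
    apply (Rmult_le_compat_l (Rpower zeta (-1 - / theta alpha p))) in H2; [|left; apply Rpower_pos].
    replace (Rpower zeta (-1 - / theta alpha p) * (eps * Rpower zeta (1 + / theta alpha p))) with eps in H2; auto.
    rewrite Rmult_comm, Rmult_assoc, <- Rpower_plus.
    replace (1 + / theta alpha p + (-1 - / theta alpha p)) with 0 by ring.
    rewrite Rpower_O by auto. ring.
Qed.
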